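(* (i) $s_2u_1s_2u_1s_2u_1\subset \omega^2u_1+u_1u_2u_1u_2u_1\subset U''$. (ii) $s_2\omega^2u_1=s_1s_2s_1^4s_2s_1^3s_2u_1\subset U''$.
   Context: Let $B_3=\langle s_1,s_2\mid s_1s_2s_1=s_2s_1s_2\rangle$, $R_5=\mathbb{Z}[a,b,c,d,e,e^{-1}]$, and let $H_5$ be the quotient of the group algebra $R_5B_3$ by the relations $s_i^5=as_i^4+bs_i^3+cs_i^2+ds_i+e$ for $i=1,2$; identify $s_i$ with their images. For $i=1,2$ let $u_i$ be the $R_5$-subalgebra of $H_5$ generated by $s_i$. Set $\omega=s_2s_1^2s_2$. For $R_5$-submodules (or elements) $X_1,\dots,X_n$, $X_1\cdots X_n$ denotes the $R_5$-submodule spanned by products $x_1\cdots x_n$, $x_j\in X_j$; sums are sums of submodules. Define $U'=u_1u_2u_1+u_1\omega+u_1\omega^{-1}+u_1s_2^{-1}s_1^2s_2^{-1}u_1+u_1s_2s_1^{-2}s_2u_1+u_1s_2^2s_1^2s_2^2u_1+u_1s_2^{-2}s_1^{-2}s_2^{-2}u_1+u_1s_2s_1^{-2}s_2^2u_1+u_1s_2^{-1}s_1^2s_2^{-2}u_1+u_1s_2^{-1}s_1s_2^{-1}u_1+u_1s_2s_1^{-1}s_2u_1+u_1s_2^{-2}s_1^{-2}s_2^2u_1+u_1s_2^2s_1^2s_2^{-2}u_1+u_1s_2^2s_1^{-2}s_2^2u_1+u_1s_2^{-2}s_1^2s_2^{-2}u_1+u_1s_2^{-2}s_1s_2^{-1}u_1+u_1s_2^{-1}s_1s_2^{-2}u_1$;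 $U''=U'+u_1\omega^2+u_1\omega^{-2}+u_1s_2^{-2}s_1^2s_2^{-1}s_1s_2^{-1}u_1+u_1s_2^2s_1^{-2}s_2s_1^{-1}s_2u_1+u_1s_2s_1^{-2}s_2^2s_1^{-2}s_2^2u_1+u_1s_2^{-1}s_1^2s_2^{-2}s_1^2s_2^{-2}u_1$. *)

(* Defs.v *)
From HB Require Import structures.
From mathcomp Require Import all_boot all_order all_algebra.
Set Implicit Arguments. Unset Strict Implicit. Unset Printing Implicit Defensive.
Import GRing.Theory.
Local Open Scope ring_scope.

Definition sset (A : Type) := A -> Prop.

Definition span (R : comNzRingType) (A : lmodType R) (P : sset A) : sset A :=
  fun z => exists (n : nat) (c : 'I_n -> R) (v : 'I_n -> A),
    (forall i, P (v i)) /\ z = \sum_(i < n) c i *: v i.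

Definition elt (A : Type) (x : A) : sset A := fun z => z = x.

Fixpoint prods (A : nzRingType) (l : seq (sset A)) : sset A :=
  match l with
  | [::] => fun z => z = 1
  | X :: l' => fun z => exists x y, X x /\ prods l' y /\ z = x * y
  end.

(* X_1 ... X_n : the R-submodule spanned by the products. *)
Definition mprod (R : comNzRingType) (A : algType R) (l : seq (sset A)) : sset A :=
  span (prods l).

Definition msum (A : zmodType) (l : seq (sset A)) : sset A :=
  foldr (fun X Y z => exists x y, X x /\ Y y /\ z = x + y) (fun z => z = 0) l.

(* u_i : the R-subalgebra generated by s (= R-span of the powers of s). *)
Definition usub (R : comNzRingType) (A : algType R) (s : A) : sset A :=
  span (fun z => exists k : nat, z = s ^+ k).

Definition ssubset (A : Type) (P Q : sset A) : Prop := forall z, P z -> Q z.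
Definition sseteq (A : Type) (P Q : sset A) : Prop := forall z, P z <-> Q z.

Definition omega (A : nzRingType) (s1 s2 : A) : A := s2 * s1 ^+ 2 * s2.

Definition uxu (R : comNzRingType) (A : unitAlgType R) (s1 : A) (x : A) : sset A :=
  mprod [:: usub s1; elt x; usub s1].

Definition Uprime (R : comNzRingType) (A : unitAlgType R) (s1 s2 : A) : sset A :=
  let u1 := usub s1 in let u2 := usub s2 in let w := omega s1 s2 in
  msum [::
    mprod [:: u1; u2; u1];
    mprod [:: u1; elt w];
    mprod [:: u1; elt w^-1];
    uxu s1 (s2^-1 * s1 ^+ 2 * s2^-1);
    uxu s1 (s2 * s1 ^- 2 * s2);
    uxu s1 (s2 ^+ 2 * s1 ^+ 2 * s2 ^+ 2);
    uxu s1 (s2 ^- 2 * s1 ^- 2 * s2 ^- 2);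
    uxu s1 (s2 * s1 ^- 2 * s2 ^+ 2);
    uxu s1 (s2^-1 * s1 ^+ 2 * s2 ^- 2);
    uxu s1 (s2^-1 * s1 * s2^-1);
    uxu s1 (s2 * s1^-1 * s2);
    uxu s1 (s2 ^- 2 * s1 ^- 2 * s2 ^+ 2);
    uxu s1 (s2 ^+ 2 * s1 ^+ 2 * s2 ^- 2);
    uxu s1 (s2 ^+ 2 * s1 ^- 2 * s2 ^+ 2);
    uxu s1 (s2 ^- 2 * s1 ^+ 2 * s2 ^- 2);
    uxu s1 (s2 ^- 2 * s1 * s2^-1);
    uxu s1 (s2^-1 * s1 * s2 ^- 2)].

Definition Usecond (R : comNzRingType) (A : unitAlgType R) (s1 s2 : A) : sset A :=
  let u1 := usub s1 in let w := omega s1 s2 in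
  msum [::
    Uprime s1 s2;
    mprod [:: u1; elt (w ^+ 2)];
    mprod [:: u1; elt (w ^- 2)];
    uxu s1 (s2 ^- 2 * s1 ^+ 2 * s2^-1 * s1 * s2^-1);
    uxu s1 (s2 ^+ 2 * s1 ^- 2 * s2 * s1^-1 * s2);
    uxu s1 (s2 * s1 ^- 2 * s2 ^+ 2 * s1 ^- 2 * s2 ^+ 2);
    uxu s1 (s2^-1 * s1 ^+ 2 * s2 ^- 2 * s1 ^+ 2 * s2 ^- 2)].

Definition H5data (R : comNzRingType) (A : unitAlgType R) (a b c d e : R) (s1 s2 : A)
  : Prop :=
  (exists einv : R, e * einv = 1) /\ s1 \is a GRing.unit /\ s2 \is a GRing.unit /\
      s1 * s2 * s1 = s2 * s1 * s2 /\
      s1 ^+ 5 = a *: s1 ^+ 4 + b *: s1 ^+ 3 + c *: s1 ^+ 2 + d *: s1 + e%:A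
    /\ s2 ^+ 5 = a *: s2 ^+ 4 + b *: s2 ^+ 3 + c *: s2 ^+ 2 + d *: s2 + e%:A.

(* Main.v *)
Require Import Defs.
From HB Require Import structures.
From mathcomp Require Import all_boot all_order all_algebra.
From mathcomp Require Import zify.
Set Implicit Arguments. Unset Strict Implicit. Unset Printing Implicit Defensive.
Import GRing.Theory.
Local Open Scope ring_scope.

Fixpoint isin (T : Type) (x : T) (l : seq T) : Prop :=
  match l with [::] => False | y :: l' => x = y \/ isin x l' end.

Section Gen.
Variables (R : comNzRingType) (A : unitAlgType R).

Definition subm (S : sset A) :=
  S 0 /\ (forall x y, S x -> S y -> S (x + y)) /\ (forall r x, S x -> S (r *: x)).

Lemma subm0 S : subm S -> S 0. Proof. by case. Qed.
Lemma submD S x y : subm S -> S x -> S y -> S (x + y). Proof. by case=> _ [H _]; apply: H. Qed.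
Lemma submZ S r x : subm S -> S x -> S (r *: x). Proof. by case=> _ [_ H]; apply: H. Qed.
Lemma submN S x : subm S -> S x -> S (- x).
Proof. by move=> hS hx; rewrite -scaleN1r; apply: submZ. Qed.
Lemma submB S x y : subm S -> S x -> S y -> S (x - y).
Proof. by move=> hS hx hy; apply: submD => //; apply: submN. Qed.

Lemma span_subm (P : sset A) : subm (Defs.span P).
Proof.
split; first by exists 0%N, (fun _ => 0), (fun _ => 0); split; [by case|by rewrite big_ord0].
split.
- move=> x y [n [c [v [Hv ->]]]] [m [c' [v' [Hv' ->]]]].
  exists (n + m)%N, (fun i => match split i with inl j => c j | inr j => c' j end),
     (fun i => match split i with inl j => v j | inr j => v' j end).
  split; first by move=> i; case: (split i).
  rewrite big_split_ord /=; congr (_ + _); apply: eq_bigr => i _.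
    by have := unsplitK (inl i : 'I_n + 'I_m) => /= ->.
  by have := unsplitK (inr i : 'I_n + 'I_m) => /= ->.
- move=> r x [n [c [v [Hv ->]]]]; exists n, (fun i => r * c i), v; split => //.
  by rewrite scaler_sumr; apply: eq_bigr => i _; rewrite scalerA.
Qed.

Lemma span_in (P : sset A) x : P x -> Defs.span P x.
Proof.
move=> Px; exists 1%N, (fun _ => 1), (fun _ => x); split => //.
by rewrite big_ord1 scale1r.
Qed.

Lemma span_min (P S : sset A) : subm S -> (forall x, P x -> S x) -> forall z, Defs.span P z -> S z.
Proof.
move=> hS hP z [n [c [v [Hv ->]]]].
elim/big_ind: _ => //; [exact: subm0| by move=> x y; apply: submD |].
by move=> i _; apply: submZ => //; apply: hP.
Qed.

Lemma subm_mul (S : sset A) L Rr : subm S -> subm (fun z => S (L * z * Rr)).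
Proof.
move=> hS; split; first by rewrite mulr0 mul0r; apply: subm0.
split.
- by move=> x y hx hy; rewrite mulrDr mulrDl; apply: submD.
- by move=> r x hx; rewrite -scalerAr -scalerAl; apply: submZ.
Qed.

Lemma span_lin (P S : sset A) L Rr : subm S -> (forall x, P x -> S (L * x * Rr)) ->
  forall z, Defs.span P z -> S (L * z * Rr).
Proof. move=> hS hP z; exact: (span_min (subm_mul L Rr hS) hP). Qed.

Lemma usub_lin (s : A) (S : sset A) L Rr : subm S -> (forall k, S (L * s ^+ k * Rr)) ->
  forall z, usub s z -> S (L * z * Rr).
Proof. by move=> hS hk z; apply: span_lin => // x [k ->]. Qed.

Lemma msum_subm (l : seq (sset A)) : (forall X, isin X l -> subm X) -> subm (msum l).
Proof.
elim: l => [_|X l IH hl] /=.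
  split => //; split; first by move=> x y -> ->; rewrite addr0.
  by move=> r x ->; rewrite scaler0.
have hX := hl X (or_introl erefl).
have hL := IH (fun Y hY => hl Y (or_intror hY)).
split; first by exists 0, 0; rewrite addr0; split; [exact: subm0|split => //; exact: subm0].
split.
- move=> x y [x1 [y1 [h1 [h2 ->]]]] [x2 [y2 [h3 [h4 ->]]]].
  exists (x1 + x2), (y1 + y2); split; first exact: submD.
  split; first exact: submD.
  by rewrite addrACA.
- move=> r x [x1 [y1 [h1 [h2 ->]]]]; exists (r *: x1), (r *: y1).
  split; first exact: submZ. split; first exact: submZ.
  by rewrite scalerDr.
Qed.

Lemma msum_in (l : seq (sset A)) X z : (forall Y, isin Y l -> subm Y) -> isin X l -> X z -> msum l z.
Proof.
elim: l => [//|Y l IH] hl /= [<-|hin] hz.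
  exists z, 0; split => //; split; last by rewrite addr0.
  by apply: subm0; apply: msum_subm => W hW; apply: hl; right.
exists 0, z; split; first by apply: subm0; apply: hl; left.
split; last by rewrite add0r.
by apply: IH => // W hW; apply: hl; right.
Qed.

Lemma msum_map (l : seq (sset A)) (f : A -> A) :
  (forall x y, f (x + y) = f x + f y) -> f 0 = 0 ->
  (forall X, isin X l -> forall z, X z -> X (f z)) ->
  forall z, msum l z -> msum l (f z).
Proof.
move=> fD f0; elim: l => [_ z /= ->|X l IH] /=; first by rewrite f0.
move=> hl z [x [y [hx [hy ->]]]]; exists (f x), (f y); rewrite fD; split.
  by apply: (hl X) => //=; left.
split => //; apply: IH => // W hW; by apply: hl => /=; right.
Qed.

Lemma msum_lmul (l : seq (sset A)) m :
  (forall X, isin X l -> forall z, X z -> X (m * z)) ->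
  forall z, msum l z -> msum l (m * z).
Proof. by apply: msum_map; [move=> x y; rewrite mulrDr|rewrite mulr0]. Qed.

Lemma msum_rmul (l : seq (sset A)) m :
  (forall X, isin X l -> forall z, X z -> X (z * m)) ->
  forall z, msum l z -> msum l (z * m).
Proof. by apply: msum_map; [move=> x y; rewrite mulrDl|rewrite mul0r]. Qed.

Lemma mprod_subm l : subm (@mprod R A l). Proof. exact: span_subm. Qed.

End Gen.

Definition rules : seq (seq nat * seq nat) :=
  [:: ([:: 0%N], [:: 7; 5; 5; 4]%N); ([:: 2%N], [:: 4; 7; 5; 5]%N);
      ([:: 1%N], [:: 7; 4; 5]%N); ([:: 3%N], [:: 5; 7; 4]%N);
      ([:: 4; 4]%N, [:: 6%N]); ([:: 5; 5; 5]%N, [:: 6%N]);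
      ([:: 4; 6]%N, [:: 6; 4]%N); ([:: 5; 6]%N, [:: 6; 5]%N);
      ([:: 4; 7]%N, [:: 7; 4]%N); ([:: 5; 7]%N, [:: 7; 5]%N);
      ([:: 6; 7]%N, [::]); ([:: 7; 6]%N, [::])].

Fixpoint tryrules (rs : seq (seq nat * seq nat)) (w : seq nat) : option (seq nat) :=
  match rs with
  | [::] => None
  | (l, r) :: rs' => if take (size l) w == l then Some (r ++ drop (size l) w) else tryrules rs' w
  end.

Arguments tryrules : simpl never.

Fixpoint step (w : seq nat) : option (seq nat) :=
  match w with
  | [::] => None
  | x :: w' => match tryrules rules w with
               | Some w2 => Some w2
               | None => match step w' with Some w3 => Some (x :: w3) | None => None end
               end
  end.

Fixpoint nf (n : nat) (w : seq nat) : seq nat :=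
  match n with
  | 0%N => w
  | n'.+1 => match step w with Some w' => nf n' w' | None => w end
  end.

Definition nfeq (w1 w2 : seq nat) : bool := nf 2000 w1 == nf 2000 w2.

Section Alg.
Variables (R : comNzRingType) (A : unitAlgType R) (s1 s2 : A).
Hypotheses (u1 : s1 \is a GRing.unit) (u2 : s2 \is a GRing.unit)
  (braid : s1 * s2 * s1 = s2 * s1 * s2).

Definition Dl := s1 * s2 * s1.
Definition Zl := Dl * Dl.

Definition evall (n : nat) : A :=
  match n with 0 => s1 | 1 => s1^-1 | 2 => s2 | 3 => s2^-1 | 4 => Dl | 5 => s1 * s2
  | 6 => Zl | _ => Zl^-1 end.

Definition evalw (w : seq nat) : A := foldr (fun l acc => evall l * acc) 1 w.

Lemma evalw_cat w1 w2 : evalw (w1 ++ w2) = evalw w1 * evalw w2.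
Proof. by elim: w1 => [|x w IH] /=; rewrite ?mul1r // IH mulrA. Qed.

Lemma D_s1 : Dl * s1 = s2 * Dl.
Proof. by rewrite /Dl !mulrA -braid. Qed.
Lemma D_s2 : Dl * s2 = s1 * Dl.
Proof. by rewrite /Dl -!mulrA [s2 * (s1 * s2)]mulrA -braid !mulrA. Qed.
Lemma Z_s1 : Zl * s1 = s1 * Zl.
Proof. by rewrite /Zl -mulrA D_s1 mulrA D_s2 mulrA. Qed.
Lemma Z_s2 : Zl * s2 = s2 * Zl.
Proof. by rewrite /Zl -mulrA D_s2 mulrA D_s1 mulrA. Qed.
Lemma Zunit : Zl \is a GRing.unit.
Proof. by rewrite /Zl /Dl !unitrMl. Qed.
Lemma Zi_comm x : Zl * x = x * Zl -> Zl^-1 * x = x * Zl^-1.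
Proof.
move=> h; apply: (mulrI Zunit); rewrite mulrA mulrV ?Zunit // mul1r.
by rewrite mulrA h -mulrA mulrV ?Zunit // mulr1.
Qed.
Lemma Y3 : (s1 * s2) * ((s1 * s2) * (s1 * s2)) = Zl.
Proof.
have -> : (s1 * s2) * ((s1 * s2) * (s1 * s2)) = (s1 * s2 * s1) * (s2 * s1 * s2) by rewrite !mulrA.
by rewrite -braid.
Qed.
Lemma ZiZ x : Zl^-1 * (Zl * x) = x.
Proof. by rewrite mulrA mulVr ?Zunit // mul1r. Qed.

Lemma rules_ok lr : isin lr rules -> evalw lr.1 = evalw lr.2.
Proof.
have Ds := D_s1; have Ds2 := D_s2; have Zs := Z_s1; have Zs2 := Z_s2.
have ZD : Zl * Dl = Dl * Zl by rewrite /Zl mulrA.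
have ZY : Zl * (s1 * s2) = (s1 * s2) * Zl by rewrite mulrA Zs -mulrA Zs2 mulrA.
move=> h.
case: h => [->|h] /=.
  rewrite !mulr1.
  suff -> : (s1 * s2) * ((s1 * s2) * Dl) = Zl * s1 by rewrite ZiZ.
  by rewrite -Y3 /Dl !mulrA.
case: h => [->|h] /=.
  rewrite !mulr1 !mulrA -(Zi_comm ZD) -!mulrA.
  transitivity (Zl^-1 * (Zl * s2)); first by rewrite ZiZ.
  by congr (_ * _); rewrite /Zl /Dl !mulrA.
case: h => [->|h] /=.
  rewrite !mulr1.
  suff -> : Dl * (s1 * s2) = Zl * s1^-1 by rewrite ZiZ.
  by rewrite /Zl /Dl -[in RHS]mulrA !mulrA mulrK.
case: h => [->|h] /=.
  rewrite !mulr1 mulrA -(Zi_comm ZY) -mulrA.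
  transitivity (Zl^-1 * (Zl * s2^-1)); first by rewrite ZiZ.
  congr (_ * _); apply: (mulIr u2).
  by rewrite mulrVK // -Y3 /Dl !mulrA.
case: h => [->|h] /=; first by rewrite !mulr1.
case: h => [->|h] /=; first by rewrite !mulr1 Y3.
case: h => [->|h] /=; first by rewrite !mulr1 ZD.
case: h => [->|h] /=; first by rewrite !mulr1 ZY.
case: h => [->|h] /=; first by rewrite !mulr1 (Zi_comm ZD).
case: h => [->|h] /=; first by rewrite !mulr1 (Zi_comm ZY).
case: h => [->|h] /=; first by rewrite !mulr1 mulrV ?Zunit.
case: h => [->|h] /=; first by rewrite !mulr1 mulVr ?Zunit.
by [].
Qed.

Lemma tryrules_ok rs w w' : (forall lr, isin lr rs -> evalw lr.1 = evalw lr.2) ->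
  tryrules rs w = Some w' -> evalw w = evalw w'.
Proof.
elim: rs => [//|[l r] rs IH] hrs.
change (tryrules ((l, r) :: rs) w) with
  (if take (size l) w == l then Some (r ++ drop (size l) w) else tryrules rs w).
case: ifP => [/eqP hl [<-]|_ h]; last by apply: IH => // lr hlr; apply: hrs; right.
have ew : w = l ++ drop (size l) w by rewrite -{1}hl cat_take_drop.
rewrite {1}ew !evalw_cat.
by rewrite (hrs (l, r) (or_introl erefl)).
Qed.

Lemma step_ok w w' : step w = Some w' -> evalw w = evalw w'.
Proof.
elim: w w' => [//|x w IH] w' /=.
case h: (tryrules rules (x :: w)) => [w2|].
  by move=> [<-]; apply: tryrules_ok h; apply: rules_ok.
case h2: (step w) => [w3|//] [<-] /=.
by rewrite (IH _ h2).
Qed.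

Lemma nf_ok n w : evalw (nf n w) = evalw w.
Proof.
elim: n w => [//|n IH] w /=.
case h: (step w) => [w'|//].
by rewrite IH (step_ok h).
Qed.

Lemma nfeq_ok w1 w2 : nfeq w1 w2 -> evalw w1 = evalw w2.
Proof. by move=> /eqP h; rewrite -(nf_ok 2000 w1) h nf_ok. Qed.

End Alg.



Section Q.
Variables (R : comNzRingType) (A : unitAlgType R) (a b c d e einv : R).
Hypothesis he : e * einv = 1.

Definition quint (s : A) :=
  s ^+ 5 = a *: s ^+ 4 + b *: s ^+ 3 + c *: s ^+ 2 + d *: s + e%:A.

Definition pwr (s : A) (t : int) : A :=
  match t with Posz n => s ^+ n | Negz n => s^-1 ^+ n.+1 end.

Lemma inv_poly s : s \is a GRing.unit -> quint s ->
  s^-1 = einv *: (s ^+ 4 - (a *: s ^+ 3 + b *: s ^+ 2 + c *: s + d%:A)).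
Proof.
move=> us q; apply: (mulrI us); rewrite mulrV // -scalerAr mulrBr.
rewrite !mulrDr -!scalerAr -!exprS mulr1 -expr2.
by rewrite q [_ + e%:A]addrC addrK scalerA mulrC he scale1r.
Qed.

Lemma pwrS s t : s \is a GRing.unit -> pwr s (t + 1) = pwr s t * s.
Proof.
move=> us; case: t => [n|n].
  have -> : Posz n + 1 = Posz n.+1 by lia.
  by rewrite /= -exprSr.
case: n => [|n].
  have -> : Negz 0 + 1 = Posz 0 by [].
  by rewrite /= expr1 mulVr.
have -> : Negz n.+1 + 1 = Negz n by lia.
by rewrite /= [s^-1 ^+ n.+2]exprSr -mulrA mulVr // mulr1.
Qed.

Lemma pwrD s t n : s \is a GRing.unit -> pwr s (t + n%:Z) = pwr s t * s ^+ n.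
Proof.
move=> us; elim: n => [|n IH]; first by rewrite addr0 mulr1.
have -> : t + n.+1%:Z = (t + n%:Z) + 1 by lia.
by rewrite pwrS // IH exprSr mulrA.
Qed.

Section Line.
Variables (s : A) (us : s \is a GRing.unit) (qs : quint s) (S : sset A) (hS : subm S).
Variables (L Rr : A).
Let F t := L * pwr s t * Rr.

Lemma F5 t : F (t + 5%:Z) =
  a *: F (t + 4%:Z) + b *: F (t + 3%:Z) + c *: F (t + 2%:Z) + d *: F (t + 1%:Z) + e *: F t.
Proof.
by rewrite /F !pwrD // qs !mulrDr !mulrDl -!scalerAr -!scalerAl expr1 mulr1.

Qed.

Lemma line t0 : (forall i : nat, (i < 5)%N -> S (F (t0 + i%:Z))) -> forall t, S (F t).
Proof.
move=> h0.
have up : forall n : nat, forall i : nat, (i < 5)%N -> S (F (t0 + (n + i)%:Z)).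
  elim=> [|n IH] i hi; first by rewrite add0n; apply: h0.
  case: (ltnP i 4) => hi4.
    have -> : (n.+1 + i)%N = (n + i.+1)%N by rewrite addSnnS.
    by apply: IH.
  have -> : i = 4%N by lia.
  have -> : t0 + (n.+1 + 4)%:Z = (t0 + n%:Z) + 5%:Z by lia.
  rewrite F5.
  have E k : (k < 5)%N -> S (F (t0 + n%:Z + k%:Z)).
    by move=> hk; have := IH k hk; congr (S (F _)); lia.
  apply: submD => //; last by apply: submZ => //; rewrite -[t0 + n%:Z]addr0; apply: (E 0%N).
  apply: submD => //; last by apply: submZ => //; apply: (E 1%N).
  apply: submD => //; last by apply: submZ => //; apply: (E 2%N).
  apply: submD => //; last by apply: submZ => //; apply: (E 3%N).
  by apply: submZ => //; apply: (E 4%N).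
have down : forall n : nat, forall i : nat, (i < 5)%N -> S (F (t0 - n%:Z + i%:Z)).
  elim=> [|n IH] i hi; first by rewrite subr0; apply: h0.
  case: i hi => [|i] hi; last first.
    have -> : t0 - n.+1%:Z + i.+1%:Z = t0 - n%:Z + i%:Z by lia.
    by apply: IH; lia.
  set u := t0 - n.+1%:Z + 0%:Z.
  have E k : (k < 5)%N -> S (F (u + k.+1%:Z)).
    by move=> hk; have := IH k hk; congr (S (F _)); rewrite /u; lia.
  have hu : F u = einv *: (F (u + 5%:Z) - (a *: F (u + 4%:Z) + b *: F (u + 3%:Z)
     + c *: F (u + 2%:Z) + d *: F (u + 1%:Z))).
    by rewrite F5 [_ + e *: F u]addrC addrK scalerA mulrC he scale1r.
  rewrite hu; apply: submZ => //; apply: submB => //; first exact: (E 4%N).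
  apply: submD => //; last by apply: submZ => //; apply: (E 0%N).
  apply: submD => //; last by apply: submZ => //; apply: (E 1%N).
  apply: submD => //; last by apply: submZ => //; apply: (E 2%N).
  by apply: submZ => //; apply: (E 3%N).
move=> t; case ht: (t - t0) => [n|n].
  have := up n 0%N erefl; congr (S (F _)); lia.
have := down n.+1 0%N erefl; congr (S (F _)); lia.
Qed.

End Line.
End Q.

Arguments msum : simpl never.
Arguments prods : simpl never.
Arguments mprod : simpl never.

Definition pwd (l li : nat) (t : int) : seq nat :=
  match t with Posz n => nseq n l | Negz n => nseq n.+1 li end.

Section Main.
Variables (R : comNzRingType) (A : unitAlgType R) (a b c d e einv : R) (s1 s2 : A).
Hypotheses (he : e * einv = 1) (u1 : s1 \is a GRing.unit) (u2 : s2 \is a GRing.unit)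
  (braid : s1 * s2 * s1 = s2 * s1 * s2)
  (q1 : quint a b c d e s1) (q2 : quint a b c d e s2).

Local Notation ev := (evalw s1 s2).
Local Notation V := (Usecond s1 s2).

Lemma grp w1 w2 : nfeq w1 w2 -> ev w1 = ev w2.
Proof. exact: nfeq_ok. Qed.

Lemma usub_subm (s : A) : subm (usub s). Proof. exact: span_subm. Qed.
Lemma usub_pow (s : A) k : usub s (s ^+ k). Proof. by apply: span_in; exists k. Qed.
Lemma usub1 (s : A) : usub s 1. Proof. by rewrite -(expr0 s); apply: usub_pow. Qed.

Lemma usub_lmul (s z : A) : usub s z -> usub s (s * z).
Proof.
move=> hz; rewrite -[s * z]mulr1; apply: (usub_lin (s:=s) (usub_subm s) _ hz) => k.
by rewrite mulr1 -exprS; apply: usub_pow.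
Qed.
Lemma usub_rmul (s z : A) : usub s z -> usub s (z * s).
Proof.
move=> hz; rewrite -[z]mul1r; apply: (usub_lin (s:=s) (usub_subm s) _ hz) => k.
by rewrite mul1r -exprSr; apply: usub_pow.
Qed.

Lemma lmul_pow (S : sset A) s : (forall z, S z -> S (s * z)) -> forall k z, S z -> S (s ^+ k * z).
Proof. by move=> h; elim=> [|k IH] z hz; rewrite ?mul1r // exprS -mulrA; apply: h; apply: IH. Qed.
Lemma rmul_pow (S : sset A) s : (forall z, S z -> S (z * s)) -> forall k z, S z -> S (z * s ^+ k).
Proof. by move=> h; elim=> [|k IH] z hz; rewrite ?mulr1 // exprSr mulrA; apply: h; apply: IH. Qed.

Lemma lmul_inv (S : sset A) s : s \is a GRing.unit -> quint a b c d e s -> subm S ->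
  (forall z, S z -> S (s * z)) -> forall z, S z -> S (s^-1 * z).
Proof.
move=> us qs hS h z hz; rewrite (inv_poly he us qs) -scalerAl mulrBl !mulrDl -!scalerAl ?mulr_algl ?mul1r. 
have P k : S (s ^+ k * z) by apply: lmul_pow.
apply: submZ => //; apply: submB => //.
apply: submD => //; last exact: submZ.
apply: submD => //; last by apply: submZ => //; rewrite -[s]expr1; apply: P.
by apply: submD => //; apply: submZ.
Qed.
Lemma rmul_inv (S : sset A) s : s \is a GRing.unit -> quint a b c d e s -> subm S ->
  (forall z, S z -> S (z * s)) -> forall z, S z -> S (z * s^-1).
Proof.
move=> us qs hS h z hz; rewrite (inv_poly he us qs) -scalerAr mulrBr !mulrDr -!scalerAr ?mulr_algr ?mulr1.
have P k : S (z * s ^+ k) by apply: rmul_pow.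
apply: submZ => //; apply: submB => //.
apply: submD => //; last exact: submZ.
apply: submD => //; last by apply: submZ => //; rewrite -[s]expr1; apply: P.
by apply: submD => //; apply: submZ.
Qed.

Lemma lmul_pwr (S : sset A) s : s \is a GRing.unit -> quint a b c d e s -> subm S ->
  (forall z, S z -> S (s * z)) -> forall t z, S z -> S (pwr s t * z).
Proof.
move=> us qs hS h [n|n] z hz /=; first exact: lmul_pow.
by apply: lmul_pow => // y hy; apply: lmul_inv.
Qed.
Lemma rmul_pwr (S : sset A) s : s \is a GRing.unit -> quint a b c d e s -> subm S ->
  (forall z, S z -> S (z * s)) -> forall t z, S z -> S (z * pwr s t).
Proof.
move=> us qs hS h [n|n] z hz /=; first exact: rmul_pow.
by apply: rmul_pow => // y hy; apply: rmul_inv.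
Qed.

Lemma usub_pwr (s : A) t : s \is a GRing.unit -> quint a b c d e s -> usub s (pwr s t).
Proof.
move=> us qs; rewrite -[pwr s t]mul1r; apply: rmul_pwr => //.
  exact: usub_subm.
  exact: usub_rmul.
exact: usub1.
Qed.


Lemma mprod_lmul (l : seq (sset A)) z : mprod (usub s1 :: l) z -> mprod (usub s1 :: l) (s1 * z).
Proof.
move=> hz; rewrite -[s1 * z]mulr1; apply: (span_lin (mprod_subm _) _ hz).
move=> x [y [w [hy [hw ->]]]]; rewrite mulr1 mulrA; apply: span_in.
by exists (s1 * y), w; split => //; apply: usub_lmul.
Qed.

Lemma mprod3_rmul (X Y : sset A) z : mprod [:: X; Y; usub s1] z -> mprod [:: X; Y; usub s1] (z * s1).
Proof.
move=> hz; rewrite -[z]mul1r; apply: (span_lin (mprod_subm _) _ hz).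
move=> x [x1 [y [h1 [[x2 [y2 [h2 [[x3 [y3 [h3 [-> ->]]]] ->]]]] ->]]]].
rewrite mul1r !mulr1 -!mulrA; apply: span_in.
exists x1, (x2 * (x3 * s1 * 1)); split => //; split; last by rewrite mulr1 !mulrA.
exists x2, (x3 * s1 * 1); split => //; split => //.
exists (x3 * s1), 1; split; first exact: usub_rmul.
by split.
Qed.

Lemma mprod2_rmul (y z : A) : y * s1 = s1 * y ->
  mprod [:: usub s1; elt y] z -> mprod [:: usub s1; elt y] (z * s1).
Proof.
move=> hy hz; rewrite -[z]mul1r; apply: (span_lin (mprod_subm _) _ hz).
move=> x [x1 [w [h1 [[x2 [y2 [h2 [-> ->]]]] ->]]]].
rewrite /elt in h2; subst x2.
rewrite mul1r !mulr1 -mulrA hy mulrA; apply: span_in.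
exists (x1 * s1), (y * 1); split; first exact: usub_rmul.
split; last by rewrite mulr1.
by exists y, 1.
Qed.

Lemma om_word : omega s1 s2 = ev [:: 2; 0; 0; 2]%N.
Proof. by rewrite /omega /= !mulr1 expr2 !mulrA. Qed.

Lemma om_unit : omega s1 s2 \is a GRing.unit.
Proof. by rewrite /omega !unitrMl ?unitrX. Qed.

Lemma om_inv : (omega s1 s2)^-1 = ev [:: 3; 1; 1; 3]%N.
Proof.
apply: (mulrI om_unit); rewrite mulrV ?om_unit // om_word -evalw_cat.
by rewrite (grp (w2 := [::])).
Qed.

Lemma om_comm : GRing.comm s1 (omega s1 s2).
Proof.
rewrite /GRing.comm om_word.
transitivity (ev [:: 0; 2; 0; 0; 2]%N); first by [].
transitivity (ev [:: 2; 0; 0; 2; 0]%N); first by apply: grp.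
by rewrite /= !mulr1 !mulrA.
Qed.


Lemma Up_subm : subm (Uprime s1 s2).
Proof.
rewrite /Uprime /=; apply: msum_subm => X hX.
by repeat (case: hX => [->|hX]; first exact: mprod_subm).
Qed.

Lemma V_subm : subm V.
Proof.
rewrite /Usecond /=; apply: msum_subm => X hX.
case: hX => [->|hX]; first exact: Up_subm.
by repeat (case: hX => [->|hX]; first exact: mprod_subm).
Qed.

Lemma V_lmul z : V z -> V (s1 * z).
Proof.
rewrite /Usecond /=; apply: msum_lmul => X hX.
case: hX => [->|hX].
  rewrite /Uprime /=; apply: msum_lmul => Y hY.
  by repeat (case: hY => [->|hY]; first by move=> y; apply: mprod_lmul).
by repeat (case: hX => [->|hX]; first by move=> y; apply: mprod_lmul).
Qed.

Lemma comm_om_pow k : (omega s1 s2 ^+ k) * s1 = s1 * (omega s1 s2 ^+ k).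
Proof. by have := commrX k om_comm. Qed.
Lemma comm_om_ipow k : (omega s1 s2 ^- k) * s1 = s1 * (omega s1 s2 ^- k).
Proof. by have := commrV (commrX k om_comm). Qed.

Lemma V_rmul z : V z -> V (z * s1).
Proof.
rewrite /Usecond /=; apply: msum_rmul => X hX.
case: hX => [->|hX].
  rewrite /Uprime /=; apply: msum_rmul => Y hY.
  case: hY => [->|hY]; first by move=> y; apply: mprod3_rmul.
  case: hY => [->|hY].
    by move=> y; apply: mprod2_rmul; rewrite -[omega s1 s2]expr1 comm_om_pow.
  case: hY => [->|hY].
    by move=> y; apply: mprod2_rmul; rewrite -[omega s1 s2]expr1 comm_om_ipow.
  by repeat (case: hY => [->|hY]; first by move=> y; apply: mprod3_rmul).
case: hX => [->|hX].
  by move=> y; apply: mprod2_rmul; rewrite comm_om_pow.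
case: hX => [->|hX].
  by move=> y; apply: mprod2_rmul; rewrite comm_om_ipow.
by repeat (case: hX => [->|hX]; first by move=> y; apply: mprod3_rmul).
Qed.


Lemma V_lpwr t z : V z -> V (pwr s1 t * z).
Proof. apply: lmul_pwr => //; [exact: V_subm| exact: V_lmul]. Qed.
Lemma V_rpwr t z : V z -> V (z * pwr s1 t).
Proof. apply: rmul_pwr => //; [exact: V_subm| exact: V_rmul]. Qed.

Lemma V_of_Up z : Uprime s1 s2 z -> V z.
Proof.
rewrite /Usecond; move=> h; apply: (msum_in (X := Uprime s1 s2)) => //; last by left.
move=> X hX; case: hX => [->|hX]; first exact: Up_subm.
by repeat (case: hX => [->|hX]; first exact: mprod_subm).
Qed.

Lemma uxu_self x : uxu s1 x x.
Proof.
apply: span_in; exists 1, (x * (1 * 1)); split; first exact: usub1.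
split; last by rewrite !mulr1 mul1r.
exists x, (1 * 1); split => //; split => //.
by exists 1, 1; split; [exact: usub1|split].
Qed.

Lemma mp2_self y : mprod [:: usub s1; elt y] y.
Proof.
apply: span_in; exists 1, (y * 1); split; first exact: usub1.
split; last by rewrite mulr1 mul1r.
by exists y, 1.
Qed.


Lemma V_uxu x : isin (uxu s1 x) [::
    uxu s1 (s2^-1 * s1 ^+ 2 * s2^-1);
    uxu s1 (s2 * s1 ^- 2 * s2);
    uxu s1 (s2 ^+ 2 * s1 ^+ 2 * s2 ^+ 2);
    uxu s1 (s2 ^- 2 * s1 ^- 2 * s2 ^- 2);
    uxu s1 (s2 * s1 ^- 2 * s2 ^+ 2);
    uxu s1 (s2^-1 * s1 ^+ 2 * s2 ^- 2);
    uxu s1 (s2^-1 * s1 * s2^-1);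
    uxu s1 (s2 * s1^-1 * s2);
    uxu s1 (s2 ^- 2 * s1 ^- 2 * s2 ^+ 2);
    uxu s1 (s2 ^+ 2 * s1 ^+ 2 * s2 ^- 2);
    uxu s1 (s2 ^+ 2 * s1 ^- 2 * s2 ^+ 2);
    uxu s1 (s2 ^- 2 * s1 ^+ 2 * s2 ^- 2);
    uxu s1 (s2 ^- 2 * s1 * s2^-1);
    uxu s1 (s2^-1 * s1 * s2 ^- 2)] -> V x.
Proof.
move=> hin; apply: V_of_Up; rewrite /Uprime.
apply: (msum_in (X := uxu s1 x)); [by move=> ? hX; repeat (case: hX => [->|hX]; first exact: mprod_subm) | | exact: uxu_self].
by right; right; right.
Qed.

Lemma V_uxu2 x : isin (uxu s1 x) [::
    uxu s1 (s2 ^- 2 * s1 ^+ 2 * s2^-1 * s1 * s2^-1);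
    uxu s1 (s2 ^+ 2 * s1 ^- 2 * s2 * s1^-1 * s2);
    uxu s1 (s2 * s1 ^- 2 * s2 ^+ 2 * s1 ^- 2 * s2 ^+ 2);
    uxu s1 (s2^-1 * s1 ^+ 2 * s2 ^- 2 * s1 ^+ 2 * s2 ^- 2)] -> V x.
Proof.
move=> hin; rewrite /Usecond.
apply: (msum_in (X := uxu s1 x)); last exact: uxu_self.
  move=> X hX; case: hX => [->|hX]; first exact: Up_subm.
  by repeat (case: hX => [->|hX]; first exact: mprod_subm).
by right; right; right.
Qed.

Lemma V_om k : (k = 1 \/ k = 2)%N -> V (omega s1 s2 ^+ k).
Proof.
move=> hk; case: hk => ->.
  apply: V_of_Up; rewrite /Uprime; apply: (msum_in (X := mprod [:: usub s1; elt (omega s1 s2 ^+ 1)])).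
  - by move=> ? hX; repeat (case: hX => [->|hX]; first exact: mprod_subm).
  - by right; left.
  - exact: mp2_self.
rewrite /Usecond; apply: (msum_in (X := mprod [:: usub s1; elt (omega s1 s2 ^+ 2)])).
- move=> X hX; case: hX => [->|hX]; first exact: Up_subm.
  by repeat (case: hX => [->|hX]; first exact: mprod_subm).
- by right; left.
- exact: mp2_self.
Qed.

Lemma V_omi k : (k = 1 \/ k = 2)%N -> V (omega s1 s2 ^- k).
Proof.
move=> hk; case: hk => ->.
  apply: V_of_Up; rewrite /Uprime; apply: (msum_in (X := mprod [:: usub s1; elt (omega s1 s2 ^- 1)])).
  - by move=> ? hX; repeat (case: hX => [->|hX]; first exact: mprod_subm).
  - by right; right; left; rewrite expr1.
  - exact: mp2_self.
rewrite /Usecond; apply: (msum_in (X := mprod [:: usub s1; elt (omega s1 s2 ^- 2)])).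
- move=> X hX; case: hX => [->|hX]; first exact: Up_subm.
  by repeat (case: hX => [->|hX]; first exact: mprod_subm).
- by right; right; left.
- exact: mp2_self.
Qed.


Lemma ev_nseq n l : ev (nseq n l) = evall s1 s2 l ^+ n.
Proof. by elim: n => [|n IH] /=; rewrite ?expr0 // IH exprS. Qed.

Lemma ev_pwd1 t : ev (pwd 0 1 t) = pwr s1 t.
Proof. by case: t => n; rewrite /pwd ev_nseq. Qed.
Lemma ev_pwd2 t : ev (pwd 2 3 t) = pwr s2 t.
Proof. by case: t => n; rewrite /pwd ev_nseq. Qed.

Lemma base_gen xw p q w : V (ev xw) -> nfeq w (pwd 0 1 p ++ xw ++ pwd 0 1 q) -> V (ev w).
Proof.
move=> hx /grp ->; rewrite !evalw_cat ev_pwd1 ev_pwd1 mulrA.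
by apply: V_rpwr; apply: V_lpwr.
Qed.

Lemma base_uu p q r w : nfeq w (pwd 0 1 p ++ pwd 2 3 q ++ pwd 0 1 r) -> V (ev w).
Proof.
move=> /grp ->; rewrite !evalw_cat ev_pwd1 ev_pwd2 ev_pwd1.
apply: V_of_Up; rewrite /Uprime.
apply: (msum_in (X := mprod [:: usub s1; usub s2; usub s1])).
- by move=> ? hX; repeat (case: hX => [->|hX]; first exact: mprod_subm).
- by left.
apply: span_in; exists (pwr s1 p), (pwr s2 q * (pwr s1 r * 1)).
split; first exact: usub_pwr.
split; last by rewrite mulr1.
exists (pwr s2 q), (pwr s1 r * 1); split; first exact: usub_pwr.
split => //; exists (pwr s1 r), 1; split; first exact: usub_pwr.
by split.
Qed.

Definition g (x y z : int) := ev (pwd 2 3 x ++ pwd 0 1 y ++ pwd 2 3 z).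

Lemma g_eq x y z : g x y z = pwr s2 x * pwr s1 y * pwr s2 z.
Proof. by rewrite /g !evalw_cat ev_pwd1 !ev_pwd2 mulrA. Qed.

Lemma lineA t0 y z : V (g t0 y z) -> V (g (t0 + 1) y z) -> V (g (t0 + 2%:Z) y z) ->
  V (g (t0 + 3%:Z) y z) -> V (g (t0 + 4%:Z) y z) -> forall t, V (g t y z).
Proof.
move=> h0 h1 h2 h3 h4 t.
have := line he u2 q2 V_subm (L := 1) (Rr := pwr s1 y * pwr s2 z) (t0 := t0) _ t.
rewrite g_eq mul1r mulrA; apply.
move=> i hi; rewrite mul1r mulrA -g_eq.
case: i hi => [|[|[|[|[|//]]]]] _; [by rewrite addr0| exact: h1| exact: h2| exact: h3| exact: h4].
Qed.

Lemma lineB t0 x z : V (g x t0 z) -> V (g x (t0 + 1) z) -> V (g x (t0 + 2%:Z) z) ->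
  V (g x (t0 + 3%:Z) z) -> V (g x (t0 + 4%:Z) z) -> forall t, V (g x t z).
Proof.
move=> h0 h1 h2 h3 h4 t.
have := line he u1 q1 V_subm (L := pwr s2 x) (Rr := pwr s2 z) (t0 := t0) _ t.
rewrite g_eq; apply.
move=> i hi; rewrite -g_eq.
case: i hi => [|[|[|[|[|//]]]]] _; [by rewrite addr0| exact: h1| exact: h2| exact: h3| exact: h4].
Qed.

Lemma lineC t0 x y : V (g x y t0) -> V (g x y (t0 + 1)) -> V (g x y (t0 + 2%:Z)) ->
  V (g x y (t0 + 3%:Z)) -> V (g x y (t0 + 4%:Z)) -> forall t, V (g x y t).
Proof.
move=> h0 h1 h2 h3 h4 t.
have := line he u2 q2 V_subm (L := pwr s2 x * pwr s1 y) (Rr := 1) (t0 := t0) _ t.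
rewrite g_eq mulr1; apply.
move=> i hi; rewrite mulr1 -g_eq.
case: i hi => [|[|[|[|[|//]]]]] _; [by rewrite addr0| exact: h1| exact: h2| exact: h3| exact: h4].
Qed.

Definition wA := [:: 3;0;0;3]%N.
Lemma genA : V (ev wA).
Proof.
have -> : ev wA = s2^-1 * s1 ^+ 2 * s2^-1 by rewrite /wA /= !mulr1 -?exprVn ?expr2 !mulrA.
apply: V_uxu; by repeat (first [by left | right]).
Qed.

Definition wB := [:: 2;1;1;2]%N.
Lemma genB : V (ev wB).
Proof.
have -> : ev wB = s2 * s1 ^- 2 * s2 by rewrite /wB /= !mulr1 -?exprVn ?expr2 !mulrA.
apply: V_uxu; by repeat (first [by left | right]).
Qed.

Definition wC := [:: 2;2;0;0;2;2]%N.
Lemma genC : V (ev wC).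
Proof.
have -> : ev wC = s2 ^+ 2 * s1 ^+ 2 * s2 ^+ 2 by rewrite /wC /= !mulr1 -?exprVn ?expr2 !mulrA.
apply: V_uxu; by repeat (first [by left | right]).
Qed.

Definition wD := [:: 3;3;1;1;3;3]%N.
Lemma genD : V (ev wD).
Proof.
have -> : ev wD = s2 ^- 2 * s1 ^- 2 * s2 ^- 2 by rewrite /wD /= !mulr1 -?exprVn ?expr2 !mulrA.
apply: V_uxu; by repeat (first [by left | right]).
Qed.

Definition wE := [:: 2;1;1;2;2]%N.
Lemma genE : V (ev wE).
Proof.
have -> : ev wE = s2 * s1 ^- 2 * s2 ^+ 2 by rewrite /wE /= !mulr1 -?exprVn ?expr2 !mulrA.
apply: V_uxu; by repeat (first [by left | right]).
Qed.

Definition wF := [:: 3;0;0;3;3]%N.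
Lemma genF : V (ev wF).
Proof.
have -> : ev wF = s2^-1 * s1 ^+ 2 * s2 ^- 2 by rewrite /wF /= !mulr1 -?exprVn ?expr2 !mulrA.
apply: V_uxu; by repeat (first [by left | right]).
Qed.

Definition wG := [:: 3;0;3]%N.
Lemma genG : V (ev wG).
Proof.
have -> : ev wG = s2^-1 * s1 * s2^-1 by rewrite /wG /= !mulr1 -?exprVn ?expr2 !mulrA.
apply: V_uxu; by repeat (first [by left | right]).
Qed.

Definition wH := [:: 2;1;2]%N.
Lemma genH : V (ev wH).
Proof.
have -> : ev wH = s2 * s1^-1 * s2 by rewrite /wH /= !mulr1 -?exprVn ?expr2 !mulrA.
apply: V_uxu; by repeat (first [by left | right]).
Qed.

Definition wI := [:: 3;3;1;1;2;2]%N.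
Lemma genI : V (ev wI).
Proof.
have -> : ev wI = s2 ^- 2 * s1 ^- 2 * s2 ^+ 2 by rewrite /wI /= !mulr1 -?exprVn ?expr2 !mulrA.
apply: V_uxu; by repeat (first [by left | right]).
Qed.

Definition wJ := [:: 2;2;0;0;3;3]%N.
Lemma genJ : V (ev wJ).
Proof.
have -> : ev wJ = s2 ^+ 2 * s1 ^+ 2 * s2 ^- 2 by rewrite /wJ /= !mulr1 -?exprVn ?expr2 !mulrA.
apply: V_uxu; by repeat (first [by left | right]).
Qed.

Definition wK := [:: 2;2;1;1;2;2]%N.
Lemma genK : V (ev wK).
Proof.
have -> : ev wK = s2 ^+ 2 * s1 ^- 2 * s2 ^+ 2 by rewrite /wK /= !mulr1 -?exprVn ?expr2 !mulrA.
apply: V_uxu; by repeat (first [by left | right]).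
Qed.

Definition wL := [:: 3;3;0;0;3;3]%N.
Lemma genL : V (ev wL).
Proof.
have -> : ev wL = s2 ^- 2 * s1 ^+ 2 * s2 ^- 2 by rewrite /wL /= !mulr1 -?exprVn ?expr2 !mulrA.
apply: V_uxu; by repeat (first [by left | right]).
Qed.

Definition wM := [:: 3;3;0;3]%N.
Lemma genM : V (ev wM).
Proof.
have -> : ev wM = s2 ^- 2 * s1 * s2^-1 by rewrite /wM /= !mulr1 -?exprVn ?expr2 !mulrA.
apply: V_uxu; by repeat (first [by left | right]).
Qed.

Definition wN := [:: 3;0;3;3]%N.
Lemma genN : V (ev wN).
Proof.
have -> : ev wN = s2^-1 * s1 * s2 ^- 2 by rewrite /wN /= !mulr1 -?exprVn ?expr2 !mulrA.
apply: V_uxu; by repeat (first [by left | right]).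
Qed.

Definition wP := [:: 3;3;0;0;3;0;3]%N.
Lemma genP : V (ev wP).
Proof.
have -> : ev wP = s2 ^- 2 * s1 ^+ 2 * s2^-1 * s1 * s2^-1 by rewrite /wP /= !mulr1 -?exprVn ?expr2 !mulrA.
apply: V_uxu2; by repeat (first [by left | right]).
Qed.

Definition wQ := [:: 2;2;1;1;2;1;2]%N.
Lemma genQ : V (ev wQ).
Proof.
have -> : ev wQ = s2 ^+ 2 * s1 ^- 2 * s2 * s1^-1 * s2 by rewrite /wQ /= !mulr1 -?exprVn ?expr2 !mulrA.
apply: V_uxu2; by repeat (first [by left | right]).
Qed.

Definition wR := [:: 2;1;1;2;2;1;1;2;2]%N.
Lemma genR : V (ev wR).
Proof.
have -> : ev wR = s2 * s1 ^- 2 * s2 ^+ 2 * s1 ^- 2 * s2 ^+ 2 by rewrite /wR /= !mulr1 -?exprVn ?expr2 !mulrA.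
apply: V_uxu2; by repeat (first [by left | right]).
Qed.

Definition wS := [:: 3;0;0;3;3;0;0;3;3]%N.
Lemma genS : V (ev wS).
Proof.
have -> : ev wS = s2^-1 * s1 ^+ 2 * s2 ^- 2 * s1 ^+ 2 * s2 ^- 2 by rewrite /wS /= !mulr1 -?exprVn ?expr2 !mulrA.
apply: V_uxu2; by repeat (first [by left | right]).
Qed.

Definition wom1 := [:: 2;0;0;2]%N.
Lemma genom1 : V (ev wom1).
Proof. by rewrite /wom1 -om_word -[omega s1 s2]expr1; apply: V_om; left. Qed.
Definition wom_1 := [:: 3;1;1;3]%N.
Lemma genom_1 : V (ev wom_1).
Proof. by rewrite /wom_1 -om_inv -[omega s1 s2]expr1; apply: V_omi; left. Qed.
Definition wom2 := [:: 2;0;0;2;2;0;0;2]%N.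
Lemma genom2 : V (ev wom2).
Proof.
have -> : ev wom2 = omega s1 s2 ^+ 2 by rewrite expr2 om_word -evalw_cat.
by apply: V_om; right.
Qed.
Definition wom_2 := [:: 3;1;1;3;3;1;1;3]%N.
Lemma genom_2 : V (ev wom_2).
Proof.
have -> : ev wom_2 = omega s1 s2 ^- 2 by rewrite -exprVn expr2 om_inv -evalw_cat.
by apply: V_omi; right.
Qed.

Lemma cube : forall x y z, V (g x y z).
Proof.
have h_m2_m2_m2 : V (g (Negz 1) (Negz 1) (Negz 1)) by apply: (base_gen (p:=(Posz 0)) (q:=(Posz 0)) genD); vm_compute; reflexivity.
have h_m1_m2_m1 : V (g (Negz 0) (Negz 1) (Negz 0)) by apply: (base_gen (p:=(Posz 0)) (q:=(Posz 0)) genom_1); vm_compute; reflexivity.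
have h_0_m2_m1 : V (g (Posz 0) (Negz 1) (Negz 0)) by apply: (base_uu (p:=(Negz 1)) (q:=(Negz 0)) (r:=(Posz 0))); vm_compute; reflexivity.
have h_1_m2_m1 : V (g (Posz 1) (Negz 1) (Negz 0)) by apply: (base_uu (p:=(Negz 0)) (q:=(Negz 1)) (r:=(Posz 1))); vm_compute; reflexivity.
have h_2_m2_m1 : V (g (Posz 2) (Negz 1) (Negz 0)) by apply: (base_gen (p:=(Negz 0)) (q:=(Posz 1)) genG); vm_compute; reflexivity.
have h_3_m2_m1 : V (g (Posz 3) (Negz 1) (Negz 0)) by apply: (base_gen (p:=(Negz 0)) (q:=(Posz 1)) genA); vm_compute; reflexivity.
have h_m2_m2_m1 : V (g (Negz 1) (Negz 1) (Negz 0)) := lineA (t0 := (Negz 0)) h_m1_m2_m1 h_0_m2_m1 h_1_m2_m1 h_2_m2_m1 h_3_m2_m1 (Negz 1).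
have h_m2_m2_0 : V (g (Negz 1) (Negz 1) (Posz 0)) by apply: (base_uu (p:=(Posz 0)) (q:=(Negz 1)) (r:=(Negz 1))); vm_compute; reflexivity.
have h_m2_m2_1 : V (g (Negz 1) (Negz 1) (Posz 1)) by apply: (base_gen (p:=(Posz 0)) (q:=(Negz 0)) genN); vm_compute; reflexivity.
have h_m2_m2_2 : V (g (Negz 1) (Negz 1) (Posz 2)) by apply: (base_gen (p:=(Posz 0)) (q:=(Posz 0)) genI); vm_compute; reflexivity.
have h_m2_m1_m2 : V (g (Negz 1) (Negz 0) (Negz 1)) by apply: (base_gen (p:=(Posz 0)) (q:=(Negz 0)) genom_1); vm_compute; reflexivity.
have h_m2_m1_m1 : V (g (Negz 1) (Negz 0) (Negz 0)) by apply: (base_uu (p:=(Negz 0)) (q:=(Negz 0)) (r:=(Negz 1))); vm_compute; reflexivity.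
have h_m2_m1_0 : V (g (Negz 1) (Negz 0) (Posz 0)) by apply: (base_uu (p:=(Posz 0)) (q:=(Negz 1)) (r:=(Negz 0))); vm_compute; reflexivity.
have h_m2_m1_1 : V (g (Negz 1) (Negz 0) (Posz 1)) by apply: (base_gen (p:=(Posz 0)) (q:=(Negz 0)) genG); vm_compute; reflexivity.
have h_m2_m1_2 : V (g (Negz 1) (Negz 0) (Posz 2)) by apply: (base_gen (p:=(Posz 0)) (q:=(Negz 0)) genA); vm_compute; reflexivity.
have h_m2_0_m2 : V (g (Negz 1) (Posz 0) (Negz 1)) by apply: (base_uu (p:=(Posz 0)) (q:=(Negz 3)) (r:=(Posz 0))); vm_compute; reflexivity.
have h_m2_0_m1 : V (g (Negz 1) (Posz 0) (Negz 0)) by apply: (base_uu (p:=(Posz 0)) (q:=(Negz 2)) (r:=(Posz 0))); vm_compute; reflexivity.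
have h_m2_0_0 : V (g (Negz 1) (Posz 0) (Posz 0)) by apply: (base_uu (p:=(Posz 0)) (q:=(Negz 1)) (r:=(Posz 0))); vm_compute; reflexivity.
have h_m2_0_1 : V (g (Negz 1) (Posz 0) (Posz 1)) by apply: (base_uu (p:=(Posz 0)) (q:=(Negz 0)) (r:=(Posz 0))); vm_compute; reflexivity.
have h_m2_0_2 : V (g (Negz 1) (Posz 0) (Posz 2)) by apply: (base_uu (p:=(Posz 0)) (q:=(Posz 0)) (r:=(Posz 0))); vm_compute; reflexivity.
have h_m2_1_m1 : V (g (Negz 1) (Posz 1) (Negz 0)) by apply: (base_gen (p:=(Posz 0)) (q:=(Posz 0)) genM); vm_compute; reflexivity.
have h_m2_1_0 : V (g (Negz 1) (Posz 1) (Posz 0)) by apply: (base_uu (p:=(Posz 0)) (q:=(Negz 1)) (r:=(Posz 1))); vm_compute; reflexivity.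
have h_m2_1_1 : V (g (Negz 1) (Posz 1) (Posz 1)) by apply: (base_uu (p:=(Posz 1)) (q:=(Posz 1)) (r:=(Negz 1))); vm_compute; reflexivity.
have h_m2_1_2 : V (g (Negz 1) (Posz 1) (Posz 2)) by apply: (base_gen (p:=(Posz 1)) (q:=(Posz 0)) genB); vm_compute; reflexivity.
have h_m2_1_3 : V (g (Negz 1) (Posz 1) (Posz 3)) by apply: (base_gen (p:=(Posz 1)) (q:=(Posz 0)) genE); vm_compute; reflexivity.
have h_m2_1_m2 : V (g (Negz 1) (Posz 1) (Negz 1)) := lineC (t0 := (Negz 0)) h_m2_1_m1 h_m2_1_0 h_m2_1_1 h_m2_1_2 h_m2_1_3 (Negz 1).
have h_m2_2_m2 : V (g (Negz 1) (Posz 2) (Negz 1)) by apply: (base_gen (p:=(Posz 0)) (q:=(Posz 0)) genL); vm_compute; reflexivity.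
have h_m1_2_m1 : V (g (Negz 0) (Posz 2) (Negz 0)) by apply: (base_gen (p:=(Posz 0)) (q:=(Posz 0)) genA); vm_compute; reflexivity.
have h_0_2_m1 : V (g (Posz 0) (Posz 2) (Negz 0)) by apply: (base_uu (p:=(Posz 2)) (q:=(Negz 0)) (r:=(Posz 0))); vm_compute; reflexivity.
have h_1_2_m1 : V (g (Posz 1) (Posz 2) (Negz 0)) by apply: (base_uu (p:=(Negz 0)) (q:=(Posz 2)) (r:=(Posz 1))); vm_compute; reflexivity.
have h_2_m3_m1 : V (g (Posz 2) (Negz 2) (Negz 0)) by apply: (base_gen (p:=(Negz 0)) (q:=(Posz 1)) genN); vm_compute; reflexivity.
have h_2_m1_m1 : V (g (Posz 2) (Negz 0) (Negz 0)) by apply: (base_uu (p:=(Negz 0)) (q:=(Negz 0)) (r:=(Posz 2))); vm_compute; reflexivity.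
have h_2_0_m1 : V (g (Posz 2) (Posz 0) (Negz 0)) by apply: (base_uu (p:=(Posz 0)) (q:=(Posz 1)) (r:=(Posz 0))); vm_compute; reflexivity.
have h_2_1_m1 : V (g (Posz 2) (Posz 1) (Negz 0)) by apply: (base_gen (p:=(Posz 0)) (q:=(Posz 1)) genH); vm_compute; reflexivity.
have h_2_2_m1 : V (g (Posz 2) (Posz 2) (Negz 0)) := lineB (t0 := (Negz 2)) h_2_m3_m1 h_2_m2_m1 h_2_m1_m1 h_2_0_m1 h_2_1_m1 (Posz 2).
have h_3_m3_m1 : V (g (Posz 3) (Negz 2) (Negz 0)) by apply: (base_gen (p:=(Negz 0)) (q:=(Posz 1)) genF); vm_compute; reflexivity.
have h_3_m1_m1 : V (g (Posz 3) (Negz 0) (Negz 0)) by apply: (base_uu (p:=(Negz 0)) (q:=(Negz 0)) (r:=(Posz 3))); vm_compute; reflexivity.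
have h_3_0_m1 : V (g (Posz 3) (Posz 0) (Negz 0)) by apply: (base_uu (p:=(Posz 0)) (q:=(Posz 2)) (r:=(Posz 0))); vm_compute; reflexivity.
have h_m1_1_m1 : V (g (Negz 0) (Posz 1) (Negz 0)) by apply: (base_gen (p:=(Posz 0)) (q:=(Posz 0)) genG); vm_compute; reflexivity.
have h_0_1_m1 : V (g (Posz 0) (Posz 1) (Negz 0)) by apply: (base_uu (p:=(Posz 1)) (q:=(Negz 0)) (r:=(Posz 0))); vm_compute; reflexivity.
have h_1_1_m1 : V (g (Posz 1) (Posz 1) (Negz 0)) by apply: (base_uu (p:=(Negz 0)) (q:=(Posz 1)) (r:=(Posz 1))); vm_compute; reflexivity.
have h_3_1_m1 : V (g (Posz 3) (Posz 1) (Negz 0)) := lineA (t0 := (Negz 1)) h_m2_1_m1 h_m1_1_m1 h_0_1_m1 h_1_1_m1 h_2_1_m1 (Posz 3).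
have h_3_2_m1 : V (g (Posz 3) (Posz 2) (Negz 0)) := lineB (t0 := (Negz 2)) h_3_m3_m1 h_3_m2_m1 h_3_m1_m1 h_3_0_m1 h_3_1_m1 (Posz 2).
have h_m2_2_m1 : V (g (Negz 1) (Posz 2) (Negz 0)) := lineA (t0 := (Negz 0)) h_m1_2_m1 h_0_2_m1 h_1_2_m1 h_2_2_m1 h_3_2_m1 (Negz 1).
have h_m2_2_0 : V (g (Negz 1) (Posz 2) (Posz 0)) by apply: (base_uu (p:=(Posz 0)) (q:=(Negz 1)) (r:=(Posz 2))); vm_compute; reflexivity.
have h_m2_2_1 : V (g (Negz 1) (Posz 2) (Posz 1)) by apply: (base_gen (p:=(Posz 1)) (q:=(Negz 0)) genH); vm_compute; reflexivity.
have h_m2_2_2 : V (g (Negz 1) (Posz 2) (Posz 2)) by apply: (base_gen (p:=(Posz 1)) (q:=(Negz 0)) genJ); vm_compute; reflexivity.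
have h_m1_m2_0 : V (g (Negz 0) (Negz 1) (Posz 0)) by apply: (base_uu (p:=(Posz 0)) (q:=(Negz 0)) (r:=(Negz 1))); vm_compute; reflexivity.
have h_m1_m2_1 : V (g (Negz 0) (Negz 1) (Posz 1)) by apply: (base_uu (p:=(Posz 1)) (q:=(Negz 1)) (r:=(Negz 0))); vm_compute; reflexivity.
have h_m1_m2_2 : V (g (Negz 0) (Negz 1) (Posz 2)) by apply: (base_gen (p:=(Posz 1)) (q:=(Negz 0)) genG); vm_compute; reflexivity.
have h_m1_m2_3 : V (g (Negz 0) (Negz 1) (Posz 3)) by apply: (base_gen (p:=(Posz 1)) (q:=(Negz 0)) genA); vm_compute; reflexivity.
have h_m1_m2_m2 : V (g (Negz 0) (Negz 1) (Negz 1)) := lineC (t0 := (Negz 0)) h_m1_m2_m1 h_m1_m2_0 h_m1_m2_1 h_m1_m2_2 h_m1_m2_3 (Negz 1).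
have h_m1_m1_m2 : V (g (Negz 0) (Negz 0) (Negz 1)) by apply: (base_uu (p:=(Negz 1)) (q:=(Negz 0)) (r:=(Negz 0))); vm_compute; reflexivity.
have h_m1_m1_m1 : V (g (Negz 0) (Negz 0) (Negz 0)) by apply: (base_uu (p:=(Negz 0)) (q:=(Negz 0)) (r:=(Negz 0))); vm_compute; reflexivity.
have h_m1_m1_0 : V (g (Negz 0) (Negz 0) (Posz 0)) by apply: (base_uu (p:=(Posz 0)) (q:=(Negz 0)) (r:=(Negz 0))); vm_compute; reflexivity.
have h_m1_m1_1 : V (g (Negz 0) (Negz 0) (Posz 1)) by apply: (base_uu (p:=(Posz 1)) (q:=(Negz 0)) (r:=(Negz 0))); vm_compute; reflexivity.
have h_m1_m1_2 : V (g (Negz 0) (Negz 0) (Posz 2)) by apply: (base_uu (p:=(Posz 2)) (q:=(Negz 0)) (r:=(Negz 0))); vm_compute; reflexivity.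
have h_m1_0_m2 : V (g (Negz 0) (Posz 0) (Negz 1)) by apply: (base_uu (p:=(Posz 0)) (q:=(Negz 2)) (r:=(Posz 0))); vm_compute; reflexivity.
have h_m1_0_m1 : V (g (Negz 0) (Posz 0) (Negz 0)) by apply: (base_uu (p:=(Posz 0)) (q:=(Negz 1)) (r:=(Posz 0))); vm_compute; reflexivity.
have h_m1_0_0 : V (g (Negz 0) (Posz 0) (Posz 0)) by apply: (base_uu (p:=(Posz 0)) (q:=(Negz 0)) (r:=(Posz 0))); vm_compute; reflexivity.
have h_m1_0_1 : V (g (Negz 0) (Posz 0) (Posz 1)) by apply: (base_uu (p:=(Posz 0)) (q:=(Posz 0)) (r:=(Posz 0))); vm_compute; reflexivity.
have h_m1_0_2 : V (g (Negz 0) (Posz 0) (Posz 2)) by apply: (base_uu (p:=(Posz 0)) (q:=(Posz 1)) (r:=(Posz 0))); vm_compute; reflexivity.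
have h_m1_1_m2 : V (g (Negz 0) (Posz 1) (Negz 1)) by apply: (base_gen (p:=(Posz 0)) (q:=(Posz 0)) genN); vm_compute; reflexivity.
have h_m1_1_0 : V (g (Negz 0) (Posz 1) (Posz 0)) by apply: (base_uu (p:=(Posz 0)) (q:=(Negz 0)) (r:=(Posz 1))); vm_compute; reflexivity.
have h_m1_1_1 : V (g (Negz 0) (Posz 1) (Posz 1)) by apply: (base_uu (p:=(Posz 1)) (q:=(Posz 1)) (r:=(Negz 0))); vm_compute; reflexivity.
have h_m1_1_2 : V (g (Negz 0) (Posz 1) (Posz 2)) by apply: (base_gen (p:=(Posz 1)) (q:=(Posz 0)) genH); vm_compute; reflexivity.
have h_m1_2_m2 : V (g (Negz 0) (Posz 2) (Negz 1)) by apply: (base_gen (p:=(Posz 0)) (q:=(Posz 0)) genF); vm_compute; reflexivity.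
have h_m1_2_0 : V (g (Negz 0) (Posz 2) (Posz 0)) by apply: (base_uu (p:=(Posz 0)) (q:=(Negz 0)) (r:=(Posz 2))); vm_compute; reflexivity.
have h_m1_2_1 : V (g (Negz 0) (Posz 2) (Posz 1)) by apply: (base_uu (p:=(Posz 1)) (q:=(Posz 2)) (r:=(Negz 0))); vm_compute; reflexivity.
have h_m1_m3_2 : V (g (Negz 0) (Negz 2) (Posz 2)) by apply: (base_gen (p:=(Posz 1)) (q:=(Negz 0)) genM); vm_compute; reflexivity.
have h_m1_2_2 : V (g (Negz 0) (Posz 2) (Posz 2)) := lineB (t0 := (Negz 2)) h_m1_m3_2 h_m1_m2_2 h_m1_m1_2 h_m1_0_2 h_m1_1_2 (Posz 2).
have h_0_m2_m2 : V (g (Posz 0) (Negz 1) (Negz 1)) by apply: (base_uu (p:=(Negz 1)) (q:=(Negz 1)) (r:=(Posz 0))); vm_compute; reflexivity.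
have h_0_m2_0 : V (g (Posz 0) (Negz 1) (Posz 0)) by apply: (base_uu (p:=(Posz 0)) (q:=(Posz 0)) (r:=(Negz 1))); vm_compute; reflexivity.
have h_0_m2_1 : V (g (Posz 0) (Negz 1) (Posz 1)) by apply: (base_uu (p:=(Negz 1)) (q:=(Posz 1)) (r:=(Posz 0))); vm_compute; reflexivity.
have h_0_m2_2 : V (g (Posz 0) (Negz 1) (Posz 2)) by apply: (base_uu (p:=(Negz 1)) (q:=(Posz 2)) (r:=(Posz 0))); vm_compute; reflexivity.
have h_0_m1_m2 : V (g (Posz 0) (Negz 0) (Negz 1)) by apply: (base_uu (p:=(Negz 0)) (q:=(Negz 1)) (r:=(Posz 0))); vm_compute; reflexivity.
have h_0_m1_m1 : V (g (Posz 0) (Negz 0) (Negz 0)) by apply: (base_uu (p:=(Negz 0)) (q:=(Negz 0)) (r:=(Posz 0))); vm_compute; reflexivity.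
have h_0_m1_0 : V (g (Posz 0) (Negz 0) (Posz 0)) by apply: (base_uu (p:=(Posz 0)) (q:=(Posz 0)) (r:=(Negz 0))); vm_compute; reflexivity.
have h_0_m1_1 : V (g (Posz 0) (Negz 0) (Posz 1)) by apply: (base_uu (p:=(Negz 0)) (q:=(Posz 1)) (r:=(Posz 0))); vm_compute; reflexivity.
have h_0_m1_2 : V (g (Posz 0) (Negz 0) (Posz 2)) by apply: (base_uu (p:=(Negz 0)) (q:=(Posz 2)) (r:=(Posz 0))); vm_compute; reflexivity.
have h_0_0_m2 : V (g (Posz 0) (Posz 0) (Negz 1)) by apply: (base_uu (p:=(Posz 0)) (q:=(Negz 1)) (r:=(Posz 0))); vm_compute; reflexivity.
have h_0_0_m1 : V (g (Posz 0) (Posz 0) (Negz 0)) by apply: (base_uu (p:=(Posz 0)) (q:=(Negz 0)) (r:=(Posz 0))); vm_compute; reflexivity.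
have h_0_0_0 : V (g (Posz 0) (Posz 0) (Posz 0)) by apply: (base_uu (p:=(Posz 0)) (q:=(Posz 0)) (r:=(Posz 0))); vm_compute; reflexivity.
have h_0_0_1 : V (g (Posz 0) (Posz 0) (Posz 1)) by apply: (base_uu (p:=(Posz 0)) (q:=(Posz 1)) (r:=(Posz 0))); vm_compute; reflexivity.
have h_0_0_2 : V (g (Posz 0) (Posz 0) (Posz 2)) by apply: (base_uu (p:=(Posz 0)) (q:=(Posz 2)) (r:=(Posz 0))); vm_compute; reflexivity.
have h_0_1_m2 : V (g (Posz 0) (Posz 1) (Negz 1)) by apply: (base_uu (p:=(Posz 1)) (q:=(Negz 1)) (r:=(Posz 0))); vm_compute; reflexivity.
have h_0_1_0 : V (g (Posz 0) (Posz 1) (Posz 0)) by apply: (base_uu (p:=(Posz 0)) (q:=(Posz 0)) (r:=(Posz 1))); vm_compute; reflexivity.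
have h_0_1_1 : V (g (Posz 0) (Posz 1) (Posz 1)) by apply: (base_uu (p:=(Posz 1)) (q:=(Posz 1)) (r:=(Posz 0))); vm_compute; reflexivity.
have h_0_1_2 : V (g (Posz 0) (Posz 1) (Posz 2)) by apply: (base_uu (p:=(Posz 1)) (q:=(Posz 2)) (r:=(Posz 0))); vm_compute; reflexivity.
have h_0_2_m2 : V (g (Posz 0) (Posz 2) (Negz 1)) by apply: (base_uu (p:=(Posz 2)) (q:=(Negz 1)) (r:=(Posz 0))); vm_compute; reflexivity.
have h_0_2_0 : V (g (Posz 0) (Posz 2) (Posz 0)) by apply: (base_uu (p:=(Posz 0)) (q:=(Posz 0)) (r:=(Posz 2))); vm_compute; reflexivity.
have h_0_2_1 : V (g (Posz 0) (Posz 2) (Posz 1)) by apply: (base_uu (p:=(Posz 2)) (q:=(Posz 1)) (r:=(Posz 0))); vm_compute; reflexivity.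
have h_0_2_2 : V (g (Posz 0) (Posz 2) (Posz 2)) by apply: (base_uu (p:=(Posz 2)) (q:=(Posz 2)) (r:=(Posz 0))); vm_compute; reflexivity.
have h_1_m2_m2 : V (g (Posz 1) (Negz 1) (Negz 1)) by apply: (base_gen (p:=(Negz 0)) (q:=(Posz 0)) genM); vm_compute; reflexivity.
have h_1_m2_0 : V (g (Posz 1) (Negz 1) (Posz 0)) by apply: (base_uu (p:=(Posz 0)) (q:=(Posz 1)) (r:=(Negz 1))); vm_compute; reflexivity.
have h_1_m2_1 : V (g (Posz 1) (Negz 1) (Posz 1)) by apply: (base_gen (p:=(Posz 0)) (q:=(Posz 0)) genB); vm_compute; reflexivity.
have h_1_m2_2 : V (g (Posz 1) (Negz 1) (Posz 2)) by apply: (base_gen (p:=(Posz 0)) (q:=(Posz 0)) genE); vm_compute; reflexivity.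
have h_1_m1_m2 : V (g (Posz 1) (Negz 0) (Negz 1)) by apply: (base_gen (p:=(Negz 0)) (q:=(Posz 0)) genG); vm_compute; reflexivity.
have h_1_m1_m1 : V (g (Posz 1) (Negz 0) (Negz 0)) by apply: (base_uu (p:=(Negz 0)) (q:=(Negz 0)) (r:=(Posz 1))); vm_compute; reflexivity.
have h_1_m1_0 : V (g (Posz 1) (Negz 0) (Posz 0)) by apply: (base_uu (p:=(Posz 0)) (q:=(Posz 1)) (r:=(Negz 0))); vm_compute; reflexivity.
have h_1_m1_1 : V (g (Posz 1) (Negz 0) (Posz 1)) by apply: (base_gen (p:=(Posz 0)) (q:=(Posz 0)) genH); vm_compute; reflexivity.
have h_1_m1_m3 : V (g (Posz 1) (Negz 0) (Negz 2)) by apply: (base_gen (p:=(Negz 0)) (q:=(Posz 0)) genN); vm_compute; reflexivity.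
have h_1_m1_2 : V (g (Posz 1) (Negz 0) (Posz 2)) := lineC (t0 := (Negz 2)) h_1_m1_m3 h_1_m1_m2 h_1_m1_m1 h_1_m1_0 h_1_m1_1 (Posz 2).
have h_1_0_m2 : V (g (Posz 1) (Posz 0) (Negz 1)) by apply: (base_uu (p:=(Posz 0)) (q:=(Negz 0)) (r:=(Posz 0))); vm_compute; reflexivity.
have h_1_0_m1 : V (g (Posz 1) (Posz 0) (Negz 0)) by apply: (base_uu (p:=(Posz 0)) (q:=(Posz 0)) (r:=(Posz 0))); vm_compute; reflexivity.
have h_1_0_0 : V (g (Posz 1) (Posz 0) (Posz 0)) by apply: (base_uu (p:=(Posz 0)) (q:=(Posz 1)) (r:=(Posz 0))); vm_compute; reflexivity.
have h_1_0_1 : V (g (Posz 1) (Posz 0) (Posz 1)) by apply: (base_uu (p:=(Posz 0)) (q:=(Posz 2)) (r:=(Posz 0))); vm_compute; reflexivity.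
have h_1_0_2 : V (g (Posz 1) (Posz 0) (Posz 2)) by apply: (base_uu (p:=(Posz 0)) (q:=(Posz 3)) (r:=(Posz 0))); vm_compute; reflexivity.
have h_1_1_m2 : V (g (Posz 1) (Posz 1) (Negz 1)) by apply: (base_uu (p:=(Negz 1)) (q:=(Posz 1)) (r:=(Posz 1))); vm_compute; reflexivity.
have h_1_1_0 : V (g (Posz 1) (Posz 1) (Posz 0)) by apply: (base_uu (p:=(Posz 0)) (q:=(Posz 1)) (r:=(Posz 1))); vm_compute; reflexivity.
have h_1_1_1 : V (g (Posz 1) (Posz 1) (Posz 1)) by apply: (base_uu (p:=(Posz 1)) (q:=(Posz 1)) (r:=(Posz 1))); vm_compute; reflexivity.
have h_1_1_2 : V (g (Posz 1) (Posz 1) (Posz 2)) by apply: (base_uu (p:=(Posz 2)) (q:=(Posz 1)) (r:=(Posz 1))); vm_compute; reflexivity.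
have h_1_2_m2 : V (g (Posz 1) (Posz 2) (Negz 1)) by apply: (base_gen (p:=(Negz 0)) (q:=(Posz 1)) genH); vm_compute; reflexivity.
have h_1_2_0 : V (g (Posz 1) (Posz 2) (Posz 0)) by apply: (base_uu (p:=(Posz 0)) (q:=(Posz 1)) (r:=(Posz 2))); vm_compute; reflexivity.
have h_1_2_1 : V (g (Posz 1) (Posz 2) (Posz 1)) by apply: (base_gen (p:=(Posz 0)) (q:=(Posz 0)) genom1); vm_compute; reflexivity.
have h_1_2_m3 : V (g (Posz 1) (Posz 2) (Negz 2)) by apply: (base_gen (p:=(Negz 0)) (q:=(Posz 1)) genB); vm_compute; reflexivity.
have h_1_2_2 : V (g (Posz 1) (Posz 2) (Posz 2)) := lineC (t0 := (Negz 2)) h_1_2_m3 h_1_2_m2 h_1_2_m1 h_1_2_0 h_1_2_1 (Posz 2).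
have h_2_m2_m2 : V (g (Posz 2) (Negz 1) (Negz 1)) by apply: (base_gen (p:=(Negz 0)) (q:=(Posz 1)) genI); vm_compute; reflexivity.
have h_2_m2_0 : V (g (Posz 2) (Negz 1) (Posz 0)) by apply: (base_uu (p:=(Posz 0)) (q:=(Posz 2)) (r:=(Negz 1))); vm_compute; reflexivity.
have h_m3_m1_1 : V (g (Negz 2) (Negz 0) (Posz 1)) by apply: (base_gen (p:=(Posz 0)) (q:=(Negz 0)) genM); vm_compute; reflexivity.
have h_m3_0_1 : V (g (Negz 2) (Posz 0) (Posz 1)) by apply: (base_uu (p:=(Posz 0)) (q:=(Negz 1)) (r:=(Posz 0))); vm_compute; reflexivity.
have h_m3_1_1 : V (g (Negz 2) (Posz 1) (Posz 1)) by apply: (base_uu (p:=(Posz 1)) (q:=(Posz 1)) (r:=(Negz 2))); vm_compute; reflexivity.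
have h_m3_2_1 : V (g (Negz 2) (Posz 2) (Posz 1)) by apply: (base_gen (p:=(Posz 1)) (q:=(Negz 0)) genB); vm_compute; reflexivity.
have h_m3_3_1 : V (g (Negz 2) (Posz 3) (Posz 1)) by apply: (base_gen (p:=(Posz 1)) (q:=(Negz 0)) genE); vm_compute; reflexivity.
have h_m3_m2_1 : V (g (Negz 2) (Negz 1) (Posz 1)) := lineB (t0 := (Negz 0)) h_m3_m1_1 h_m3_0_1 h_m3_1_1 h_m3_2_1 h_m3_3_1 (Negz 1).
have h_2_m2_1 : V (g (Posz 2) (Negz 1) (Posz 1)) := lineA (t0 := (Negz 2)) h_m3_m2_1 h_m2_m2_1 h_m1_m2_1 h_0_m2_1 h_1_m2_1 (Posz 2).
have h_2_m2_2 : V (g (Posz 2) (Negz 1) (Posz 2)) by apply: (base_gen (p:=(Posz 0)) (q:=(Posz 0)) genK); vm_compute; reflexivity.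
have h_2_m1_m2 : V (g (Posz 2) (Negz 0) (Negz 1)) by apply: (base_gen (p:=(Negz 0)) (q:=(Posz 0)) genA); vm_compute; reflexivity.
have h_2_m1_0 : V (g (Posz 2) (Negz 0) (Posz 0)) by apply: (base_uu (p:=(Posz 0)) (q:=(Posz 2)) (r:=(Negz 0))); vm_compute; reflexivity.
have h_2_m1_1 : V (g (Posz 2) (Negz 0) (Posz 1)) := lineA (t0 := (Negz 2)) h_m3_m1_1 h_m2_m1_1 h_m1_m1_1 h_0_m1_1 h_1_m1_1 (Posz 2).
have h_2_m1_m3 : V (g (Posz 2) (Negz 0) (Negz 2)) by apply: (base_gen (p:=(Negz 0)) (q:=(Posz 0)) genF); vm_compute; reflexivity.
have h_2_m1_2 : V (g (Posz 2) (Negz 0) (Posz 2)) := lineC (t0 := (Negz 2)) h_2_m1_m3 h_2_m1_m2 h_2_m1_m1 h_2_m1_0 h_2_m1_1 (Posz 2).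
have h_2_0_m2 : V (g (Posz 2) (Posz 0) (Negz 1)) by apply: (base_uu (p:=(Posz 0)) (q:=(Posz 0)) (r:=(Posz 0))); vm_compute; reflexivity.
have h_2_0_0 : V (g (Posz 2) (Posz 0) (Posz 0)) by apply: (base_uu (p:=(Posz 0)) (q:=(Posz 2)) (r:=(Posz 0))); vm_compute; reflexivity.
have h_2_0_1 : V (g (Posz 2) (Posz 0) (Posz 1)) by apply: (base_uu (p:=(Posz 0)) (q:=(Posz 3)) (r:=(Posz 0))); vm_compute; reflexivity.
have h_2_0_2 : V (g (Posz 2) (Posz 0) (Posz 2)) by apply: (base_uu (p:=(Posz 0)) (q:=(Posz 4)) (r:=(Posz 0))); vm_compute; reflexivity.
have h_2_1_m2 : V (g (Posz 2) (Posz 1) (Negz 1)) by apply: (base_gen (p:=(Posz 0)) (q:=(Posz 1)) genB); vm_compute; reflexivity.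
have h_2_1_0 : V (g (Posz 2) (Posz 1) (Posz 0)) by apply: (base_uu (p:=(Posz 0)) (q:=(Posz 2)) (r:=(Posz 1))); vm_compute; reflexivity.
have h_2_1_1 : V (g (Posz 2) (Posz 1) (Posz 1)) by apply: (base_uu (p:=(Posz 1)) (q:=(Posz 1)) (r:=(Posz 2))); vm_compute; reflexivity.
have h_2_1_2 : V (g (Posz 2) (Posz 1) (Posz 2)) by apply: (base_gen (p:=(Posz 0)) (q:=(Posz 1)) genom1); vm_compute; reflexivity.
have h_2_2_m2 : V (g (Posz 2) (Posz 2) (Negz 1)) by apply: (base_gen (p:=(Posz 0)) (q:=(Posz 0)) genJ); vm_compute; reflexivity.
have h_2_2_0 : V (g (Posz 2) (Posz 2) (Posz 0)) by apply: (base_uu (p:=(Posz 0)) (q:=(Posz 2)) (r:=(Posz 2))); vm_compute; reflexivity.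
have h_2_2_1 : V (g (Posz 2) (Posz 2) (Posz 1)) := lineA (t0 := (Negz 2)) h_m3_2_1 h_m2_2_1 h_m1_2_1 h_0_2_1 h_1_2_1 (Posz 2).
have h_2_2_2 : V (g (Posz 2) (Posz 2) (Posz 2)) by apply: (base_gen (p:=(Posz 0)) (q:=(Posz 0)) genC); vm_compute; reflexivity.
have hA_h_0_m2_m2 := lineA h_m2_m2_m2 h_m1_m2_m2 h_0_m2_m2 h_1_m2_m2 h_2_m2_m2.
have hA_h_0_m2_m1 := lineA h_m2_m2_m1 h_m1_m2_m1 h_0_m2_m1 h_1_m2_m1 h_2_m2_m1.
have hA_h_0_m2_0 := lineA h_m2_m2_0 h_m1_m2_0 h_0_m2_0 h_1_m2_0 h_2_m2_0.
have hA_h_0_m2_1 := lineA h_m2_m2_1 h_m1_m2_1 h_0_m2_1 h_1_m2_1 h_2_m2_1.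
have hA_h_0_m2_2 := lineA h_m2_m2_2 h_m1_m2_2 h_0_m2_2 h_1_m2_2 h_2_m2_2.
have hA_h_0_m1_m2 := lineA h_m2_m1_m2 h_m1_m1_m2 h_0_m1_m2 h_1_m1_m2 h_2_m1_m2.
have hA_h_0_m1_m1 := lineA h_m2_m1_m1 h_m1_m1_m1 h_0_m1_m1 h_1_m1_m1 h_2_m1_m1.
have hA_h_0_m1_0 := lineA h_m2_m1_0 h_m1_m1_0 h_0_m1_0 h_1_m1_0 h_2_m1_0.
have hA_h_0_m1_1 := lineA h_m2_m1_1 h_m1_m1_1 h_0_m1_1 h_1_m1_1 h_2_m1_1.
have hA_h_0_m1_2 := lineA h_m2_m1_2 h_m1_m1_2 h_0_m1_2 h_1_m1_2 h_2_m1_2.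
have hA_h_0_0_m2 := lineA h_m2_0_m2 h_m1_0_m2 h_0_0_m2 h_1_0_m2 h_2_0_m2.
have hA_h_0_0_m1 := lineA h_m2_0_m1 h_m1_0_m1 h_0_0_m1 h_1_0_m1 h_2_0_m1.
have hA_h_0_0_0 := lineA h_m2_0_0 h_m1_0_0 h_0_0_0 h_1_0_0 h_2_0_0.
have hA_h_0_0_1 := lineA h_m2_0_1 h_m1_0_1 h_0_0_1 h_1_0_1 h_2_0_1.
have hA_h_0_0_2 := lineA h_m2_0_2 h_m1_0_2 h_0_0_2 h_1_0_2 h_2_0_2.
have hA_h_0_1_m2 := lineA h_m2_1_m2 h_m1_1_m2 h_0_1_m2 h_1_1_m2 h_2_1_m2.
have hA_h_0_1_m1 := lineA h_m2_1_m1 h_m1_1_m1 h_0_1_m1 h_1_1_m1 h_2_1_m1.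
have hA_h_0_1_0 := lineA h_m2_1_0 h_m1_1_0 h_0_1_0 h_1_1_0 h_2_1_0.
have hA_h_0_1_1 := lineA h_m2_1_1 h_m1_1_1 h_0_1_1 h_1_1_1 h_2_1_1.
have hA_h_0_1_2 := lineA h_m2_1_2 h_m1_1_2 h_0_1_2 h_1_1_2 h_2_1_2.
have hA_h_0_2_m2 := lineA h_m2_2_m2 h_m1_2_m2 h_0_2_m2 h_1_2_m2 h_2_2_m2.
have hA_h_0_2_m1 := lineA h_m2_2_m1 h_m1_2_m1 h_0_2_m1 h_1_2_m1 h_2_2_m1.
have hA_h_0_2_0 := lineA h_m2_2_0 h_m1_2_0 h_0_2_0 h_1_2_0 h_2_2_0.
have hA_h_0_2_1 := lineA h_m2_2_1 h_m1_2_1 h_0_2_1 h_1_2_1 h_2_2_1.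
have hA_h_0_2_2 := lineA h_m2_2_2 h_m1_2_2 h_0_2_2 h_1_2_2 h_2_2_2.
move=> x y z.
apply: (lineC (t0 := Negz 1)).
- apply: (lineB (t0 := Negz 1)).
  + exact: (hA_h_0_m2_m2 x).
  + exact: (hA_h_0_m1_m2 x).
  + exact: (hA_h_0_0_m2 x).
  + exact: (hA_h_0_1_m2 x).
  + exact: (hA_h_0_2_m2 x).
- apply: (lineB (t0 := Negz 1)).
  + exact: (hA_h_0_m2_m1 x).
  + exact: (hA_h_0_m1_m1 x).
  + exact: (hA_h_0_0_m1 x).
  + exact: (hA_h_0_1_m1 x).
  + exact: (hA_h_0_2_m1 x).
- apply: (lineB (t0 := Negz 1)).
  + exact: (hA_h_0_m2_0 x).
  + exact: (hA_h_0_m1_0 x).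
  + exact: (hA_h_0_0_0 x).
  + exact: (hA_h_0_1_0 x).
  + exact: (hA_h_0_2_0 x).
- apply: (lineB (t0 := Negz 1)).
  + exact: (hA_h_0_m2_1 x).
  + exact: (hA_h_0_m1_1 x).
  + exact: (hA_h_0_0_1 x).
  + exact: (hA_h_0_1_1 x).
  + exact: (hA_h_0_2_1 x).
- apply: (lineB (t0 := Negz 1)).
  + exact: (hA_h_0_m2_2 x).
  + exact: (hA_h_0_m1_2 x).
  + exact: (hA_h_0_0_2 x).
  + exact: (hA_h_0_1_2 x).
  + exact: (hA_h_0_2_2 x).
Qed.


Local Notation U1 := (usub s1).
Local Notation U2 := (usub s2).
Local Notation om := (omega s1 s2).
Definition Mset := mprod [:: U1; U2; U1; U2; U1].
Definition Tset := msum [:: mprod [:: elt (om ^+ 2); U1]; Mset].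

Lemma usub_lin_eq (s : A) (S : sset A) L Rr x z : subm S -> usub s x -> z = L * x * Rr ->
  (forall k, S (L * s ^+ k * Rr)) -> S z.
Proof. by move=> hS hx -> hk; apply: (usub_lin hS hk). Qed.

Lemma M_lin (S : sset A) : subm S ->
  (forall i j k l m : nat, S (s1 ^+ i * s2 ^+ j * s1 ^+ k * s2 ^+ l * s1 ^+ m)) ->
  forall z, Mset z -> S z.
Proof.
move=> hS hP z hz; rewrite -[z]mul1r -[_ * z]mulr1; apply: (span_lin hS _ hz).
move=> x [x1 [y1 [h1 [[x2 [y2 [h2 [[x3 [y3 [h3 [[x4 [y4 [h4 [[x5 [y5 [h5 [-> ->]]]] ->]]]] ->]]]] ->]]]] ->]]]].
apply: (usub_lin_eq (L := 1) (Rr := x2 * x3 * x4 * x5) hS h1); first by rewrite ?mulr1 ?mul1r ?mulrA.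
move=> i.
apply: (usub_lin_eq (L := s1 ^+ i) (Rr := x3 * x4 * x5) hS h2); first by rewrite ?mulr1 ?mul1r ?mulrA.
move=> j.
apply: (usub_lin_eq (L := s1 ^+ i * s2 ^+ j) (Rr := x4 * x5) hS h3); first by rewrite ?mulr1 ?mul1r ?mulrA.
move=> k.
apply: (usub_lin_eq (L := s1 ^+ i * s2 ^+ j * s1 ^+ k) (Rr := x5) hS h4); first by rewrite ?mulr1 ?mul1r ?mulrA.
move=> l.
apply: (usub_lin_eq (L := s1 ^+ i * s2 ^+ j * s1 ^+ k * s2 ^+ l) (Rr := 1) hS h5); first by rewrite ?mulr1 ?mul1r ?mulrA.
by move=> m; rewrite mulr1.
Qed.

Lemma M_in_V z : Mset z -> V z.
Proof.
apply: M_lin; first exact: V_subm.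
move=> i j k l m.
have := cube (Posz j) (Posz k) (Posz l); rewrite g_eq /= => h.
have -> : s1 ^+ i * s2 ^+ j * s1 ^+ k * s2 ^+ l * s1 ^+ m =
   pwr s1 (Posz i) * (s2 ^+ j * s1 ^+ k * s2 ^+ l) * pwr s1 (Posz m) by rewrite /= !mulrA.
by apply: V_rpwr; apply: V_lpwr.
Qed.

Lemma M_subm : subm Mset. Proof. exact: mprod_subm. Qed.

Lemma M_word p q r t m w :
  nfeq w (pwd 0 1 p ++ pwd 2 3 q ++ pwd 0 1 r ++ pwd 2 3 t ++ pwd 0 1 m) -> Mset (ev w).
Proof.
move=> /grp ->; rewrite !evalw_cat !ev_pwd1 !ev_pwd2.
apply: span_in.
exists (pwr s1 p), (pwr s2 q * (pwr s1 r * (pwr s2 t * (pwr s1 m * 1)))).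
split; first exact: usub_pwr. split; last by rewrite !mulr1.
exists (pwr s2 q), (pwr s1 r * (pwr s2 t * (pwr s1 m * 1))).
split; first exact: usub_pwr. split => //.
exists (pwr s1 r), (pwr s2 t * (pwr s1 m * 1)).
split; first exact: usub_pwr. split => //.
exists (pwr s2 t), (pwr s1 m * 1).
split; first exact: usub_pwr. split => //.
exists (pwr s1 m), 1.
split; first exact: usub_pwr. by split.
Qed.


Lemma T_subm : subm Tset.
Proof. apply: msum_subm => X [->|[->|[]]]; [exact: mprod_subm| exact: M_subm]. Qed.

Lemma om2_comm x : U1 x -> om ^+ 2 * x = x * om ^+ 2.
Proof.
move=> hx; apply: (span_min (S := fun x => om ^+ 2 * x = x * om ^+ 2)) hx.
  split; first by rewrite mulr0 mul0r.
  split; first by move=> y z hy hz; rewrite mulrDr mulrDl hy hz.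
  by move=> r y hy; rewrite -scalerAr -scalerAl hy.
move=> y [k ->]; exact: (commrX k (commr_sym (commrX 2 om_comm))).
Qed.

Lemma om2_lmul z : mprod [:: elt (om ^+ 2); U1] z -> mprod [:: elt (om ^+ 2); U1] (s1 * z).
Proof.
move=> hz; rewrite -[s1 * z]mulr1; apply: (span_lin (mprod_subm _) _ hz).
move=> x [x1 [w [h1 [[x2 [y2 [h2 [-> ->]]]] ->]]]].
rewrite /elt in h1; subst x1.
have -> : s1 * (om ^+ 2 * (x2 * 1)) * 1 = om ^+ 2 * ((s1 * x2) * 1).
  by rewrite !mulr1 mulrA -comm_om_pow mulrA.
apply: span_in; exists (om ^+ 2), (s1 * x2 * 1); split => //; split => //.
by exists (s1 * x2), 1; split; [exact: usub_lmul|split].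
Qed.

Lemma om2_rmul z : mprod [:: elt (om ^+ 2); U1] z -> mprod [:: elt (om ^+ 2); U1] (z * s1).
Proof.
move=> hz; rewrite -[z]mul1r; apply: (span_lin (mprod_subm _) _ hz).
move=> x [x1 [w [h1 [[x2 [y2 [h2 [-> ->]]]] ->]]]].
rewrite /elt in h1; subst x1.
have -> : 1 * (om ^+ 2 * (x2 * 1)) * s1 = om ^+ 2 * ((x2 * s1) * 1).
  by rewrite !mulr1 mul1r mulrA.
apply: span_in; exists (om ^+ 2), (x2 * s1 * 1); split => //; split => //.
by exists (x2 * s1), 1; split; [exact: usub_rmul|split].
Qed.

Lemma M_rmul z : Mset z -> Mset (z * s1).
Proof.
move=> hz; rewrite -[z]mul1r; apply: (span_lin (mprod_subm _) _ hz).
move=> x [x1 [y1 [h1 [[x2 [y2 [h2 [[x3 [y3 [h3 [[x4 [y4 [h4 [[x5 [y5 [h5 [-> ->]]]] ->]]]] ->]]]] ->]]]] ->]]]].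
have -> : 1 * (x1 * (x2 * (x3 * (x4 * (x5 * 1))))) * s1 =
   x1 * (x2 * (x3 * (x4 * ((x5 * s1) * 1)))) by rewrite !mulr1 mul1r !mulrA.
apply: span_in.
exists x1, (x2 * (x3 * (x4 * (x5 * s1 * 1)))); split => //; split => //.
exists x2, (x3 * (x4 * (x5 * s1 * 1))); split => //; split => //.
exists x3, (x4 * (x5 * s1 * 1)); split => //; split => //.
exists x4, (x5 * s1 * 1); split => //; split => //.
by exists (x5 * s1), 1; split; [exact: usub_rmul|split].
Qed.

Lemma T_lmul z : Tset z -> Tset (s1 * z).
Proof.
apply: msum_lmul => X [->|[->|[]]]; [exact: om2_lmul| exact: mprod_lmul].
Qed.
Lemma T_rmul z : Tset z -> Tset (z * s1).
Proof.
apply: msum_rmul => X [->|[->|[]]]; [exact: om2_rmul| exact: M_rmul].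
Qed.
Lemma T_lpwr t z : Tset z -> Tset (pwr s1 t * z).
Proof. apply: lmul_pwr => //; [exact: T_subm| exact: T_lmul]. Qed.
Lemma T_rpwr t z : Tset z -> Tset (z * pwr s1 t).
Proof. apply: rmul_pwr => //; [exact: T_subm| exact: T_rmul]. Qed.

Lemma M_in_T z : Mset z -> Tset z.
Proof.
move=> h; apply: (msum_in (X := Mset)) => //; last by right; left.
by move=> X [->|[->|[]]]; [exact: mprod_subm| exact: M_subm].
Qed.

Lemma om2_in_T x : U1 x -> Tset (om ^+ 2 * x).
Proof.
move=> hx; apply: (msum_in (X := mprod [:: elt (om ^+ 2); U1])); last 2 first.
- by left.
- apply: span_in; exists (om ^+ 2), (x * 1); split => //; split; last by rewrite mulr1.
  by exists x, 1.
by move=> X [->|[->|[]]]; [exact: mprod_subm| exact: M_subm].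
Qed.

Definition h2 (i j : int) := ev ([:: 2%N] ++ pwd 0 1 i ++ [:: 2%N] ++ pwd 0 1 j ++ [:: 2%N]).

Lemma h2_eq i j : h2 i j = s2 * pwr s1 i * s2 * pwr s1 j * s2.
Proof. by rewrite /h2 !evalw_cat !ev_pwd1 /= !mulr1 !mulrA. Qed.

Lemma lineI t0 j : Tset (h2 t0 j) -> Tset (h2 (t0 + 1) j) -> Tset (h2 (t0 + 2%:Z) j) ->
  Tset (h2 (t0 + 3%:Z) j) -> Tset (h2 (t0 + 4%:Z) j) -> forall t, Tset (h2 t j).
Proof.
move=> h0 h1 h2' h3 h4 t.
have := line he u1 q1 T_subm (L := s2) (Rr := s2 * pwr s1 j * s2) (t0 := t0) _ t.
rewrite h2_eq !mulrA; apply.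
move=> i hi; rewrite !mulrA -h2_eq.
case: i hi => [|[|[|[|[|//]]]]] _; [by rewrite addr0| exact: h1| exact: h2'| exact: h3| exact: h4].
Qed.

Lemma lineJ t0 i : Tset (h2 i t0) -> Tset (h2 i (t0 + 1)) -> Tset (h2 i (t0 + 2%:Z)) ->
  Tset (h2 i (t0 + 3%:Z)) -> Tset (h2 i (t0 + 4%:Z)) -> forall t, Tset (h2 i t).
Proof.
move=> h0 h1 h2' h3 h4 t.
have := line he u1 q1 T_subm (L := s2 * pwr s1 i * s2) (Rr := s2) (t0 := t0) _ t.
rewrite h2_eq; apply.
move=> k hk; rewrite -h2_eq.
case: k hk => [|[|[|[|[|//]]]]] _; [by rewrite addr0| exact: h1| exact: h2'| exact: h3| exact: h4].
Qed.

Lemma baseT p q r t m w :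
  nfeq w (pwd 0 1 p ++ pwd 2 3 q ++ pwd 0 1 r ++ pwd 2 3 t ++ pwd 0 1 m) -> Tset (ev w).
Proof. by move=> h; apply: M_in_T; apply: M_word h. Qed.

Lemma baseT33 w : nfeq w (wom2 ++ [:: 0%N]) -> Tset (ev w).
Proof.
move=> /grp ->; rewrite evalw_cat.
have -> : ev wom2 = om ^+ 2 by rewrite expr2 om_word -evalw_cat.
by apply: om2_in_T; rewrite /= mulr1 -[s1]expr1; apply: usub_pow.
Qed.

Lemma win2 : forall i j, Tset (h2 i j).
Proof.
have k_m1_m1 : Tset (h2 (Negz 0) (Negz 0)) by apply: (baseT (p:=(Posz 0)) (q:=(Posz 2)) (r:=(Posz 2)) (t:=(Negz 1)) (m:=(Negz 0))); vm_compute; reflexivity.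
have k_m1_0 : Tset (h2 (Negz 0) (Posz 0)) by apply: (baseT (p:=(Posz 0)) (q:=(Posz 1)) (r:=(Negz 0)) (t:=(Posz 2)) (m:=(Posz 0))); vm_compute; reflexivity.
have k_m1_1 : Tset (h2 (Negz 0) (Posz 1)) by apply: (baseT (p:=(Posz 0)) (q:=(Posz 0)) (r:=(Posz 0)) (t:=(Posz 2)) (m:=(Posz 1))); vm_compute; reflexivity.
have k_m1_2 : Tset (h2 (Negz 0) (Posz 2)) by apply: (baseT (p:=(Posz 0)) (q:=(Posz 2)) (r:=(Posz 2)) (t:=(Posz 1)) (m:=(Negz 0))); vm_compute; reflexivity.
have k_m1_3 : Tset (h2 (Negz 0) (Posz 3)) by apply: (baseT (p:=(Posz 0)) (q:=(Posz 2)) (r:=(Posz 2)) (t:=(Posz 2)) (m:=(Negz 0))); vm_compute; reflexivity.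
have k_0_m1 : Tset (h2 (Posz 0) (Negz 0)) by apply: (baseT (p:=(Posz 0)) (q:=(Posz 2)) (r:=(Negz 0)) (t:=(Posz 1)) (m:=(Posz 0))); vm_compute; reflexivity.
have k_0_0 : Tset (h2 (Posz 0) (Posz 0)) by apply: (baseT (p:=(Posz 0)) (q:=(Posz 0)) (r:=(Posz 0)) (t:=(Posz 3)) (m:=(Posz 0))); vm_compute; reflexivity.
have k_0_1 : Tset (h2 (Posz 0) (Posz 1)) by apply: (baseT (p:=(Posz 0)) (q:=(Posz 0)) (r:=(Posz 1)) (t:=(Posz 1)) (m:=(Posz 2))); vm_compute; reflexivity.
have k_0_2 : Tset (h2 (Posz 0) (Posz 2)) by apply: (baseT (p:=(Posz 0)) (q:=(Posz 2)) (r:=(Posz 2)) (t:=(Posz 1)) (m:=(Posz 0))); vm_compute; reflexivity.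
have k_0_3 : Tset (h2 (Posz 0) (Posz 3)) by apply: (baseT (p:=(Posz 0)) (q:=(Posz 2)) (r:=(Posz 3)) (t:=(Posz 1)) (m:=(Posz 0))); vm_compute; reflexivity.
have k_1_m1 : Tset (h2 (Posz 1) (Negz 0)) by apply: (baseT (p:=(Posz 0)) (q:=(Posz 0)) (r:=(Posz 1)) (t:=(Posz 2)) (m:=(Posz 0))); vm_compute; reflexivity.
have k_1_0 : Tset (h2 (Posz 1) (Posz 0)) by apply: (baseT (p:=(Posz 0)) (q:=(Posz 0)) (r:=(Posz 2)) (t:=(Posz 1)) (m:=(Posz 1))); vm_compute; reflexivity.
have k_1_1 : Tset (h2 (Posz 1) (Posz 1)) by apply: (baseT (p:=(Posz 0)) (q:=(Posz 1)) (r:=(Posz 2)) (t:=(Posz 1)) (m:=(Posz 1))); vm_compute; reflexivity.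
have k_1_2 : Tset (h2 (Posz 1) (Posz 2)) by apply: (baseT (p:=(Posz 0)) (q:=(Posz 2)) (r:=(Posz 2)) (t:=(Posz 1)) (m:=(Posz 1))); vm_compute; reflexivity.
have k_1_3 : Tset (h2 (Posz 1) (Posz 3)) by apply: (baseT (p:=(Posz 0)) (q:=(Posz 3)) (r:=(Posz 2)) (t:=(Posz 1)) (m:=(Posz 1))); vm_compute; reflexivity.
have k_2_m1 : Tset (h2 (Posz 2) (Negz 0)) by apply: (baseT (p:=(Negz 0)) (q:=(Posz 1)) (r:=(Posz 2)) (t:=(Posz 2)) (m:=(Posz 0))); vm_compute; reflexivity.
have k_2_0 : Tset (h2 (Posz 2) (Posz 0)) by apply: (baseT (p:=(Posz 0)) (q:=(Posz 1)) (r:=(Posz 2)) (t:=(Posz 2)) (m:=(Posz 0))); vm_compute; reflexivity.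
have k_2_1 : Tset (h2 (Posz 2) (Posz 1)) by apply: (baseT (p:=(Posz 0)) (q:=(Posz 1)) (r:=(Posz 3)) (t:=(Posz 1)) (m:=(Posz 1))); vm_compute; reflexivity.
have k_2_2 : Tset (h2 (Posz 2) (Posz 2)) by apply: (baseT (p:=(Posz 0)) (q:=(Posz 2)) (r:=(Posz 2)) (t:=(Posz 1)) (m:=(Posz 2))); vm_compute; reflexivity.
have k_2_3 : Tset (h2 (Posz 2) (Posz 3)) by apply: (baseT (p:=(Posz 1)) (q:=(Posz 2)) (r:=(Posz 2)) (t:=(Posz 1)) (m:=(Posz 2))); vm_compute; reflexivity.
have k_3_m1 : Tset (h2 (Posz 3) (Negz 0)) by apply: (baseT (p:=(Negz 0)) (q:=(Posz 2)) (r:=(Posz 2)) (t:=(Posz 2)) (m:=(Posz 0))); vm_compute; reflexivity.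
have k_3_0 : Tset (h2 (Posz 3) (Posz 0)) by apply: (baseT (p:=(Posz 0)) (q:=(Posz 1)) (r:=(Posz 3)) (t:=(Posz 2)) (m:=(Posz 0))); vm_compute; reflexivity.
have k_3_1 : Tset (h2 (Posz 3) (Posz 1)) by apply: (baseT (p:=(Posz 0)) (q:=(Posz 1)) (r:=(Posz 4)) (t:=(Posz 1)) (m:=(Posz 1))); vm_compute; reflexivity.
have k_3_2 : Tset (h2 (Posz 3) (Posz 2)) by apply: (baseT (p:=(Posz 0)) (q:=(Posz 2)) (r:=(Posz 2)) (t:=(Posz 1)) (m:=(Posz 3))); vm_compute; reflexivity.
have k_3_3 : Tset (h2 (Posz 3) (Posz 3)) by apply: baseT33; vm_compute; reflexivity.
have kI_k_0_m1 := lineI k_m1_m1 k_0_m1 k_1_m1 k_2_m1 k_3_m1.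
have kI_k_0_0 := lineI k_m1_0 k_0_0 k_1_0 k_2_0 k_3_0.
have kI_k_0_1 := lineI k_m1_1 k_0_1 k_1_1 k_2_1 k_3_1.
have kI_k_0_2 := lineI k_m1_2 k_0_2 k_1_2 k_2_2 k_3_2.
have kI_k_0_3 := lineI k_m1_3 k_0_3 k_1_3 k_2_3 k_3_3.
move=> i; apply: (lineJ (t0 := Negz 0)).
- exact: (kI_k_0_m1 i).
- exact: (kI_k_0_0 i).
- exact: (kI_k_0_1 i).
- exact: (kI_k_0_2 i).
- exact: (kI_k_0_3 i).
Qed.


Lemma part_ia z : mprod [:: elt s2; U1; elt s2; U1; elt s2; U1] z -> Tset z.
Proof.
move=> hz; apply: (span_min T_subm _ hz).
move=> x [x1 [y1 [h1 [[x2 [y2 [h2 [[x3 [y3 [h3 [[x4 [y4 [h4 [[x5 [y5 [h5 [[x6 [y6 [h6 [-> ->]]]] ->]]]] ->]]]] ->]]]] ->]]]] ->]]]].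
rewrite /elt in h1 h3 h5; subst x1 x3 x5.
apply: (usub_lin_eq (L := s2) (Rr := s2 * x4 * s2 * x6) T_subm h2); first by rewrite ?mulr1 ?mul1r ?mulrA.
move=> i.
apply: (usub_lin_eq (L := s2 * s1 ^+ i * s2) (Rr := s2 * x6) T_subm h4); first by rewrite ?mulr1 ?mul1r ?mulrA.
move=> j.
apply: (usub_lin_eq (L := s2 * s1 ^+ i * s2 * s1 ^+ j * s2) (Rr := 1) T_subm h6); first by rewrite ?mulr1 ?mul1r ?mulrA.
move=> k.
have := win2 (Posz i) (Posz j); rewrite h2_eq /= => h.
by rewrite mulr1; have := T_rpwr (Posz k) h.
Qed.

Lemma part_ib z : Tset z -> V z.
Proof.
move=> [x [y [hx [[x' [y' [hx' [-> ->]]]] ->]]]].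
rewrite addr0; apply: submD; first exact: V_subm; last exact: M_in_V.
apply: (span_min V_subm _ hx).
move=> v [v1 [w [h1 [[v2 [y2 [h2 [-> ->]]]] ->]]]].
rewrite /elt in h1; subst v1.
apply: (usub_lin_eq (L := om ^+ 2) (Rr := 1) V_subm h2); first by rewrite ?mulr1.
move=> k; rewrite mulr1.
have -> : om ^+ 2 = ev wom2 by rewrite expr2 om_word -evalw_cat.
by have := V_rpwr (Posz k) genom2.
Qed.

Definition wX := [:: 0; 2; 0; 0; 0; 0; 2; 0; 0; 0; 2]%N.

Lemma wX_eq : ev wX = s1 * s2 * s1 ^+ 4 * s2 * s1 ^+ 3 * s2.
Proof. by rewrite /wX /= !exprS expr0 !mulr1 !mulrA. Qed.

Lemma key2 : s2 * om ^+ 2 = ev wX * (s1^-1 * s1^-1).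
Proof.
have -> : s2 * om ^+ 2 = ev ([:: 2%N] ++ wom2) by rewrite expr2 om_word /wom2 /= !mulr1 !mulrA.
have -> : s1^-1 * s1^-1 = ev [:: 1; 1]%N by rewrite /= mulr1.
by rewrite -evalw_cat; apply: grp; vm_compute; reflexivity.
Qed.

Lemma key3 : ev wX = s2 * om ^+ 2 * (s1 * s1).
Proof. by rewrite key2 -!mulrA [s1^-1 * (s1 * s1)]mulKr // mulVr // mulr1. Qed.

Lemma U1_inv x : U1 x -> U1 (s1^-1 * x).
Proof. apply: lmul_inv => //; [exact: usub_subm| exact: usub_lmul]. Qed.

Lemma part_iia : sseteq (mprod [:: elt s2; elt (om ^+ 2); U1])
          (mprod [:: elt (s1 * s2 * s1 ^+ 4 * s2 * s1 ^+ 3 * s2); U1]).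
Proof.
move=> z; split => hz.
  apply: (span_min (mprod_subm _) _ hz).
  move=> x [x1 [y1 [h1 [[x2 [y2 [h2 [[x3 [y3 [h3 [-> ->]]]] ->]]]] ->]]]].
  rewrite /elt in h1 h2; subst x1 x2.
  apply: span_in; exists (s1 * s2 * s1 ^+ 4 * s2 * s1 ^+ 3 * s2), ((s1^-1 * (s1^-1 * x3)) * 1).
  split => //; split; first by exists (s1^-1 * (s1^-1 * x3)), 1; split; [do 2 apply: U1_inv|split].
  by rewrite !mulr1 mulrA key2 wX_eq !mulrA.
apply: (span_min (mprod_subm _) _ hz).
move=> x [x1 [y1 [h1 [[x3 [y3 [h3 [-> ->]]]] ->]]]].
rewrite /elt in h1; subst x1.
apply: span_in; exists s2, (om ^+ 2 * ((s1 * (s1 * x3)) * 1)).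
split => //; split.
  exists (om ^+ 2), ((s1 * (s1 * x3)) * 1); split => //; split => //.
  by exists (s1 * (s1 * x3)), 1; split; [do 2 apply: usub_lmul|split].
by rewrite !mulr1 -wX_eq key3 !mulrA.
Qed.

Lemma part_iib z : mprod [:: elt s2; elt (om ^+ 2); U1] z -> V z.
Proof.
move=> hz; apply: (span_min V_subm _ hz).
move=> x [x1 [y1 [h1 [[x2 [y2 [h2 [[x3 [y3 [h3 [-> ->]]]] ->]]]] ->]]]].
rewrite /elt in h1 h2; subst x1 x2.
set u := s1^-1 * (s1^-1 * x3).
have hu : U1 u by do 2 apply: U1_inv.
have -> : s2 * (om ^+ 2 * (x3 * 1)) =
   s1 * (s2 * (s1 ^+ 4 * (s2 * (s1 ^+ 3 * (s2 * (u * 1)))))).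
  by rewrite mulr1 [s2 * (_ * x3)]mulrA key2 wX_eq /u !mulr1 !mulrA.
apply: V_lmul; apply: part_ib; apply: part_ia; apply: span_in.
exists s2, (s1 ^+ 4 * (s2 * (s1 ^+ 3 * (s2 * (u * 1))))); split => //; split => //.
exists (s1 ^+ 4), (s2 * (s1 ^+ 3 * (s2 * (u * 1)))); split; first exact: usub_pow. split => //.
exists s2, (s1 ^+ 3 * (s2 * (u * 1))); split => //; split => //.
exists (s1 ^+ 3), (s2 * (u * 1)); split; first exact: usub_pow. split => //.
exists s2, (u * 1); split => //; split => //.
by exists u, 1.
Qed.

Lemma main_sec :
  (ssubset (mprod [:: elt s2; U1; elt s2; U1; elt s2; U1])
           (msum [:: mprod [:: elt (om ^+ 2); U1]; mprod [:: U1; U2; U1; U2; U1]])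
   /\ ssubset (msum [:: mprod [:: elt (om ^+ 2); U1]; mprod [:: U1; U2; U1; U2; U1]])
              (Usecond s1 s2))
  /\
  (sseteq (mprod [:: elt s2; elt (om ^+ 2); U1])
          (mprod [:: elt (s1 * s2 * s1 ^+ 4 * s2 * s1 ^+ 3 * s2); U1])
   /\ ssubset (mprod [:: elt s2; elt (om ^+ 2); U1]) (Usecond s1 s2)).
Proof using he u1 u2 braid q1 q2.
split; split.
- exact: part_ia.
- exact: part_ib.
- exact: part_iia.
- exact: part_iib.
Qed.

End Main.

Unset Implicit Arguments.

Theorem lemma4p3 (R : comNzRingType) (A : unitAlgType R) (a b c d e : R) (s1 s2 : A) :
  H5data a b c d e s1 s2 ->
  let u1 := usub s1 in let u2 := usub s2 in let w := omega s1 s2 in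
  (* (i) *)
  (ssubset (mprod [:: elt s2; u1; elt s2; u1; elt s2; u1])
           (msum [:: mprod [:: elt (w ^+ 2); u1]; mprod [:: u1; u2; u1; u2; u1]])
   /\ ssubset (msum [:: mprod [:: elt (w ^+ 2); u1]; mprod [:: u1; u2; u1; u2; u1]])
              (Usecond s1 s2))
  /\
  (* (ii) *)
  (sseteq (mprod [:: elt s2; elt (w ^+ 2); u1])
          (mprod [:: elt (s1 * s2 * s1 ^+ 4 * s2 * s1 ^+ 3 * s2); u1])
   /\ ssubset (mprod [:: elt s2; elt (w ^+ 2); u1]) (Usecond s1 s2)).
Proof.
move=> [[einv he] [hu1 [hu2 [hb [hq1 hq2]]]]].
exact: (main_sec he hu1 hu2 hb hq1 hq2).
Qed.
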